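(* Let $\left|\Omega\right\rangle=\frac{1}{\sqrt5}\big(|000\rangle+|011\rangle+|101\rangle+|110\rangle+|111\rangle\big)$ be a three-qubit state (parties $A,B,C$), and let $\rho_C=\mathrm{Tr}_{AB}\left|\Omega\right\rangle\left\langle\Omega\right|$. Then $$E_{MB}(\left|\Omega\right\rangle)=E_R(\left|\Omega\right\rangle)=E_{Hmin}(\left|\Omega\right\rangle)=S(\rho_C)=H_2\!\Big[\tfrac12\big(1+\tfrac1{\sqrt5}\big)\Big]\approx0.8505,$$ where $H_2(x)=-x\log_2x-(1-x)\log_2(1-x)$.
   Context: Entanglement measurement bound (EMB). Let $\left|\psi\right\rangle$ be a unit vector in $\mathcal{H}_1\otimes\cdots\otimes\mathcal{H}_N$, $\mathcal{H}_j=\mathbb{C}^{d_j}$. An adaptive local measurement scheme consists of: an ordering $\pi$ of the parties $\{1,\dots,N\}$; an orthonormal basis $\{|\phi^{(1)}_{i_1}\rangle\}_{i_1}$ of $\mathcal{H}_{\pi(1)}$; and, for each $k=2,\dots,N$ and each outcome history $(i_1,\dots,i_{k-1})$, an orthonormal basis $\{|\phi^{(k)}_{i_k|i_1\dots i_{k-1}}\rangle\}_{i_k}$ of $\mathcal{H}_{\pi(k)}$ (which may depend on the history). Its outcome distribution is $p_{i_1\dots i_N}=\big|\big(\langle\phi^{(1)}_{i_1}|\otimes\langle\phi^{(2)}_{i_2|i_1}|\otimes\cdots\otimes\langle\phi^{(N)}_{i_N|i_1\dots i_{N-1}}|\big)\left|\psi\right\rangle\big|^2$, where the $k$-th bra acts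 on the tensor factor of party $\pi(k)$. The EMB is $E_{MB}(\left|\psi\right\rangle)=\min H(\mathbf{p})$, where $H(\mathbf{p})=-\sum p_{i_1\dots i_N}\log_2 p_{i_1\dots i_N}$ is the Shannon entropy and the minimum is over all adaptive local measurement schemes (including all orderings of the parties). Relative entropy of entanglement: $E_R(\left|\psi\right\rangle)=\min_{\sigma}\big(-\langle\psi|\log_2\sigma|\psi\rangle\big)$, the minimum over all fully separable three-qubit states $\sigma$ (convex combinations of product states $\sigma_A\otimes\sigma_B\otimes\sigma_C$). Minimal measurement entropy (non-adaptive): for a three-qubit pure state, $E_{Hmin}(\left|\psi\right\rangle)=\min\big(-\sum_{l,m=0}^1p'_{lm}\log_2p'_{lm}\big)$, where $p'_{lm}=\big\|(\langle\alpha_l|\otimes\langle\beta_m|\otimes I)\left|\psi\right\rangle\big\|^2$ and the minimum is over all orthonormal bases $\{|\alpha_0\rangle,|\alpha_1\rangle\}$ of party $A$'s qubit and $\{|\beta_0\rangle,|\beta_1\rangle\}$ of party $B$'s qubit (Bob's basis not depending on Alice's outcome). *)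

(* Defs.v *)
From Stdlib Require Import Reals List.
Import ListNotations.
Open Scope R_scope.

Record Cx := mkC { re : R ; im : R }.
Definition C0 : Cx := mkC 0 0.
Definition C1 : Cx := mkC 1 0.
Definition RtoC (r : R) : Cx := mkC r 0.
Definition Cadd (z w : Cx) : Cx := mkC (re z + re w) (im z + im w).
Definition Cmul (z w : Cx) : Cx :=
  mkC (re z * re w - im z * im w) (re z * im w + im z * re w).
Definition Cconj (z : Cx) : Cx := mkC (re z) (- im z).
Definition Cnorm2 (z : Cx) : R := re z * re z + im z * im z.

Definition sumC {I : Type} (l : list I) (f : I -> Cx) : Cx :=
  fold_right (fun i acc => Cadd (f i) acc) C0 l.
Definition sumR {I : Type} (l : list I) (f : I -> R) : R :=
  fold_right (fun i acc => f i + acc) 0 l.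

(* computational basis of a qubit C^2 : {0,1} = bool (false = 0, true = 1) *)
Definition enumB : list bool := [false; true].
(* computational basis of three qubits (A,B,C) *)
Definition Idx3 := (bool * bool * bool)%type.
Definition enum3 : list Idx3 :=
  flat_map (fun a => flat_map (fun b => map (fun c => (a, b, c)) enumB) enumB) enumB.
Definition eqb3 (x y : Idx3) : bool :=
  match x, y with
  | (a, b, c), (a', b', c') => Bool.eqb a a' && Bool.eqb b b' && Bool.eqb c c'
  end.

Definition inner {I : Type} (l : list I) (u v : I -> Cx) : Cx :=
  sumC l (fun x => Cmul (Cconj (u x)) (v x)).

(* e : K -> (vector indexed by I) is an orthonormal family indexed by l *)
Definition orthonormal {I : Type} (l : list I) (eqb : I -> I -> bool)
    (e : I -> I -> Cx) : Prop :=
  forall i j, inner l (e i) (e j) = if eqb i j then C1 else C0.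

Definition qubit_ONB (e : bool -> bool -> Cx) : Prop := orthonormal enumB Bool.eqb e.
Definition ONB3 (e : Idx3 -> Idx3 -> Cx) : Prop := orthonormal enum3 eqb3 e.

Definition log2 (x : R) : R := ln x / ln 2.
Definition hterm (p : R) : R := if Req_dec_T p 0 then 0 else - p * log2 p.
Definition H2 (x : R) : R := hterm x + hterm (1 - x).

Definition State3 := bool -> bool -> bool -> Cx.
Definition vec3 (psi : State3) : Idx3 -> Cx :=
  fun x => match x with (a, b, c) => psi a b c end.

Definition Omega : State3 := fun a b c =>
  match a, b, c with
  | false, false, false | false, true, true | true, false, true
  | true, true, false | true, true, true => RtoC (/ sqrt 5)
  | _, _, _ => C0
  end.

Inductive Party := PA | PB | PC.
Definition party_eqb (p q : Party) : bool :=
  match p, q with PA, PA | PB, PB | PC, PC => true | _, _ => false end.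

Record Scheme := mkScheme {
  ord1 : Party; ord2 : Party; ord3 : Party;
  ph1 : bool -> bool -> Cx;
  ph2 : bool -> bool -> bool -> Cx;                  (* i1 -> |phi^(2)_{i2|i1}> *)
  ph3 : bool -> bool -> bool -> bool -> Cx           (* i1 -> i2 -> |phi^(3)_{i3|i1 i2}> *)
}.

Definition valid_scheme (S : Scheme) : Prop :=
  ord1 S <> ord2 S /\ ord1 S <> ord3 S /\ ord2 S <> ord3 S /\
  qubit_ONB (ph1 S) /\
  (forall i1, qubit_ONB (ph2 S i1)) /\
  (forall i1 i2, qubit_ONB (ph3 S i1 i2)).

(* value of the computational index of party p, given the indices y1,y2,y3
   of the parties pi(1),pi(2),pi(3) *)
Definition assign (S : Scheme) (y1 y2 y3 : bool) (p : Party) : bool :=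
  if party_eqb p (ord1 S) then y1 else if party_eqb p (ord2 S) then y2 else y3.

Definition scheme_amp (S : Scheme) (psi : State3) (i1 i2 i3 : bool) : Cx :=
  sumC enumB (fun y1 => sumC enumB (fun y2 => sumC enumB (fun y3 =>
    Cmul (Cmul (Cmul (Cconj (ph1 S i1 y1)) (Cconj (ph2 S i1 i2 y2)))
               (Cconj (ph3 S i1 i2 i3 y3)))
         (psi (assign S y1 y2 y3 PA) (assign S y1 y2 y3 PB) (assign S y1 y2 y3 PC))))).

Definition scheme_prob (S : Scheme) (psi : State3) (i1 i2 i3 : bool) : R :=
  Cnorm2 (scheme_amp S psi i1 i2 i3).

Definition scheme_entropy (S : Scheme) (psi : State3) : R :=
  sumR enumB (fun i1 => sumR enumB (fun i2 => sumR enumB (fun i3 =>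
    hterm (scheme_prob S psi i1 i2 i3)))).

Definition IsEMB (psi : State3) (v : R) : Prop :=
  (exists S, valid_scheme S /\ scheme_entropy S psi = v) /\
  (forall S, valid_scheme S -> v <= scheme_entropy S psi).

Definition hmin_prob (al be : bool -> bool -> Cx) (psi : State3) (l m : bool) : R :=
  sumR enumB (fun c =>
    Cnorm2 (sumC enumB (fun a => sumC enumB (fun b =>
      Cmul (Cmul (Cconj (al l a)) (Cconj (be m b))) (psi a b c))))).

Definition hmin_entropy (al be : bool -> bool -> Cx) (psi : State3) : R :=
  sumR enumB (fun l => sumR enumB (fun m => hterm (hmin_prob al be psi l m))).

Definition IsEHmin (psi : State3) (v : R) : Prop :=
  (exists al be, qubit_ONB al /\ qubit_ONB be /\ hmin_entropy al be psi = v) /\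
  (forall al be, qubit_ONB al -> qubit_ONB be -> v <= hmin_entropy al be psi).

Definition rhoC (psi : State3) (c c' : bool) : Cx :=
  sumC enumB (fun a => sumC enumB (fun b => Cmul (psi a b c) (Cconj (psi a b c')))).

Definition spectral2 (M : bool -> bool -> Cx) (e : bool -> bool -> Cx) (lam : bool -> R) : Prop :=
  qubit_ONB e /\
  forall i j, M i j = sumC enumB (fun k => Cmul (RtoC (lam k)) (Cmul (e k i) (Cconj (e k j)))).

(* S(rho) = -Tr rho log2 rho = H(eigenvalues) *)
Definition IsVNEntropyC (psi : State3) (v : R) : Prop :=
  (exists e lam, spectral2 (rhoC psi) e lam) /\
  (forall e lam, spectral2 (rhoC psi) e lam -> sumR enumB (fun k => hterm (lam k)) = v).

Definition Mat2 := bool -> bool -> Cx.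
Definition Mat8 := Idx3 -> Idx3 -> Cx.

Definition density2 (M : Mat2) : Prop :=
  (forall i j, M j i = Cconj (M i j)) /\
  (forall v : bool -> Cx,
      0 <= re (sumC enumB (fun i => sumC enumB (fun j =>
                 Cmul (Cmul (Cconj (v i)) (M i j)) (v j))))) /\
  sumC enumB (fun i => M i i) = C1.

Definition prod_state (sA sB sC : Mat2) : Mat8 := fun x y =>
  match x, y with
  | (a, b, c), (a', b', c') => Cmul (Cmul (sA a a') (sB b b')) (sC c c')
  end.

Definition fully_separable (s : Mat8) : Prop :=
  exists L : list (R * (Mat2 * Mat2 * Mat2)),
    Forall (fun t => match t with (w, (sA, sB, sC)) =>
               0 <= w /\ density2 sA /\ density2 sB /\ density2 sC end) L /\
    sumR L (fun t => fst t) = 1 /\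
    forall x y, s x y = sumC L (fun t => match t with (w, (sA, sB, sC)) =>
                          Cmul (RtoC w) (prod_state sA sB sC x y) end).

Definition spectral8 (M : Mat8) (e : Idx3 -> Idx3 -> Cx) (lam : Idx3 -> R) : Prop :=
  ONB3 e /\
  forall i j, M i j = sumC enum3 (fun k => Cmul (RtoC (lam k)) (Cmul (e k i) (Cconj (e k j)))).

Definition ovl (psi : State3) (e : Idx3 -> Idx3 -> Cx) (k : Idx3) : R :=
  Cnorm2 (inner enum3 (e k) (vec3 psi)).

(* -<psi| log2 sigma |psi> is finite iff psi is supported on the range of sigma *)
Definition finite_relent (psi : State3) (e : Idx3 -> Idx3 -> Cx) (lam : Idx3 -> R) : Prop :=
  forall k, ovl psi e k <> 0 -> 0 < lam k.

(* -<psi| log2 sigma |psi> = - sum_k |<e_k|psi>|^2 log2 lam_k  (terms with zero overlap dropped) *)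
Definition relent_val (psi : State3) (e : Idx3 -> Idx3 -> Cx) (lam : Idx3 -> R) : R :=
  sumR enum3 (fun k => if Req_dec_T (ovl psi e k) 0 then 0
                       else - ovl psi e k * log2 (lam k)).

(* E_R(psi) = v : minimum over fully separable sigma of -<psi|log2 sigma|psi>
   (sigma for which this is +infinity are automatically >= v) *)
Definition IsER (psi : State3) (v : R) : Prop :=
  (exists s e lam, fully_separable s /\ spectral8 s e lam /\
                   finite_relent psi e lam /\ relent_val psi e lam = v) /\
  (forall s e lam, fully_separable s -> spectral8 s e lam ->
                   finite_relent psi e lam -> v <= relent_val psi e lam).

(* Main.v *)
Require Import Defs.
From Stdlib Require Import Reals Lra Psatz List Morphisms Setoid.
From mathcomp Require ssreflect ssrfun ssrbool eqtype ssrnat seq fintype bigop ssralg matrix Rstruct complex.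
From Coquelicot Require Coquelicot.
Import ListNotations.
Open Scope R_scope.

Module MC.
Import ssreflect ssrfun ssrbool eqtype ssrnat seq fintype bigop ssralg matrix Rstruct complex.
Import GRing.Theory.
Local Open Scope ring_scope.
Definition toC (z : Cx) : R[i] := Complex (re z) (im z).
Lemma toC_add z w : toC (Cadd z w) = toC z + toC w.
Proof. by []. Qed.
Lemma toC_mul z w : toC (Cmul z w) = toC z * toC w.
Proof. by []. Qed.
Lemma toC_inj z w : toC z = toC w -> z = w.
Proof. case: z => a b; case: w => c d /= [-> ->] //. Qed.
Lemma toC0 : toC Defs.C0 = 0. Proof. by []. Qed.
Lemma toC1 : toC Defs.C1 = 1. Proof. by []. Qed.

Definition f8 (i : 'I_8) : Idx3 := nth (false,false,false) enum3 i.
Lemma sum8 (g : Idx3 -> Cx) : toC (sumC enum3 g) = \sum_(i < 8) toC (g (f8 i)).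
Proof.
rewrite !big_ord_recl big_ord0 /=.
by rewrite !toC_add toC0 addr0.
Qed.
Lemma f8_eqb (i j : 'I_8) : eqb3 (f8 i) (f8 j) = (i == j).
Proof.
case: i => [[|[|[|[|[|[|[|[|i]]]]]]]] Hi] //;
case: j => [[|[|[|[|[|[|[|[|j]]]]]]]] Hj] //.
Qed.
Lemma f8_surj (x : Idx3) : exists i : 'I_8, x = f8 i.
Proof.
case: x => [[a b] c].
case: a; case: b; case: c.
- by exists (@Ordinal 8 7 isT).
- by exists (@Ordinal 8 6 isT).
- by exists (@Ordinal 8 5 isT).
- by exists (@Ordinal 8 4 isT).
- by exists (@Ordinal 8 3 isT).
- by exists (@Ordinal 8 2 isT).
- by exists (@Ordinal 8 1 isT).
- by exists (@Ordinal 8 0 isT).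
Qed.

Lemma complete8_aux (e : Idx3 -> Idx3 -> Cx) :
  ONB3 e -> forall i j : 'I_8,
  sumC enum3 (fun k => Cmul (e k (f8 i)) (Cconj (e k (f8 j)))) = if eqb3 (f8 i) (f8 j) then Defs.C1 else Defs.C0.
Proof.
move=> He.
set A : 'M[R[i]]_8 := \matrix_(i, j) toC (Cconj (e (f8 i) (f8 j))).
set B : 'M[R[i]]_8 := \matrix_(i, j) toC (e (f8 j) (f8 i)).
have AB : A *m B = 1%:M.
  apply/matrixP => i j; rewrite !mxE.
  have := He (f8 i) (f8 j); rewrite /inner f8_eqb => H.
  have -> : (i == j)%:R = toC (if i == j then Defs.C1 else Defs.C0) by case: (i == j).
  rewrite -H sum8; apply: eq_bigr => k _; rewrite !mxE toC_mul //.
have BA := mulmx1C AB.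
move=> i j. apply: toC_inj. rewrite f8_eqb.
have -> : toC (if i == j then Defs.C1 else Defs.C0) = (i == j)%:R by case: (i == j).
have := congr1 (fun M : 'M[R[i]]_8 => M i j) BA; rewrite !mxE => <-.
rewrite sum8; apply: eq_bigr => k _; rewrite !mxE toC_mul //.
Qed.

Definition f2 (i : 'I_2) : bool := nth false enumB i.
Lemma sum2 (g : bool -> Cx) : toC (sumC enumB g) = \sum_(i < 2) toC (g (f2 i)).
Proof.
rewrite !big_ord_recl big_ord0 /=.
by rewrite !toC_add toC0 addr0.
Qed.
Lemma f2_eqb (i j : 'I_2) : Bool.eqb (f2 i) (f2 j) = (i == j).
Proof.
case: i => [[|[|i]] Hi] //; case: j => [[|[|j]] Hj] //.
Qed.
Lemma f2_surj (x : bool) : exists i : 'I_2, x = f2 i.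
Proof.
case: x.
- by exists (@Ordinal 2 1 isT).
- by exists (@Ordinal 2 0 isT).
Qed.
Lemma complete2_aux (e : bool -> bool -> Cx) :
  qubit_ONB e -> forall i j : 'I_2,
  sumC enumB (fun k => Cmul (e k (f2 i)) (Cconj (e k (f2 j)))) = if Bool.eqb (f2 i) (f2 j) then Defs.C1 else Defs.C0.
Proof.
move=> He.
set A : 'M[R[i]]_2 := \matrix_(i, j) toC (Cconj (e (f2 i) (f2 j))).
set B : 'M[R[i]]_2 := \matrix_(i, j) toC (e (f2 j) (f2 i)).
have AB : A *m B = 1%:M.
  apply/matrixP => i j; rewrite !mxE.
  have := He (f2 i) (f2 j); rewrite /inner f2_eqb => H.
  have -> : (i == j)%:R = toC (if i == j then Defs.C1 else Defs.C0) by case: (i == j).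
  rewrite -H sum2; apply: eq_bigr => k _; rewrite !mxE toC_mul //.
have BA := mulmx1C AB.
move=> i j. apply: toC_inj. rewrite f2_eqb.
have -> : toC (if i == j then Defs.C1 else Defs.C0) = (i == j)%:R by case: (i == j).
have := congr1 (fun M : 'M[R[i]]_2 => M i j) BA; rewrite !mxE => <-.
rewrite sum2; apply: eq_bigr => k _; rewrite !mxE toC_mul //.
Qed.
End MC.

Lemma complete8 (e : Idx3 -> Idx3 -> Cx) : ONB3 e -> forall x y,
  sumC enum3 (fun k => Cmul (e k x) (Cconj (e k y))) = if eqb3 x y then Defs.C1 else Defs.C0.
Proof.
intros He x y.
destruct (MC.f8_surj x) as [i ->]. destruct (MC.f8_surj y) as [j ->].
apply MC.complete8_aux; exact He.
Qed.

Lemma complete2 (e : bool -> bool -> Cx) : qubit_ONB e -> forall x y,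
  sumC enumB (fun k => Cmul (e k x) (Cconj (e k y))) = if Bool.eqb x y then Defs.C1 else Defs.C0.
Proof.
intros He x y.
destruct (MC.f2_surj x) as [i ->]. destruct (MC.f2_surj y) as [j ->].
apply MC.complete2_aux; exact He.
Qed.

Lemma Cx_ext z w : re z = re w -> im z = im w -> z = w.
Proof. destruct z, w; simpl; intros -> ->; reflexivity. Qed.

Ltac cunf := unfold sumC, sumR, inner, Cnorm2, Cmul, Cadd, Cconj, RtoC, Defs.C0, Defs.C1, enumB in *; simpl in *.
Ltac cxring := apply Cx_ext; cunf; ring.

Lemma re_sumC {I} (l : list I) f : re (sumC l f) = sumR l (fun i => re (f i)).
Proof. induction l; simpl; auto. rewrite IHl; reflexivity. Qed.
Lemma im_sumC {I} (l : list I) f : im (sumC l f) = sumR l (fun i => im (f i)).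
Proof. induction l; simpl; auto. rewrite IHl; reflexivity. Qed.

Lemma sumR_ext {I} (l : list I) f g : (forall i, f i = g i) -> sumR l f = sumR l g.
Proof. intros H; induction l; simpl; auto. rewrite H, IHl; reflexivity. Qed.
Lemma sumC_ext {I} (l : list I) f g : (forall i, f i = g i) -> sumC l f = sumC l g.
Proof. intros H; induction l; simpl; auto. rewrite H, IHl; reflexivity. Qed.
Lemma sumR_add {I} (l : list I) f g : sumR l (fun i => f i + g i) = sumR l f + sumR l g.
Proof. induction l; simpl; try ring. rewrite IHl; ring. Qed.
Lemma sumR_scal {I} (l : list I) c f : sumR l (fun i => c * f i) = c * sumR l f.
Proof. induction l; simpl; try ring. rewrite IHl; ring. Qed.
Lemma sumR_opp {I} (l : list I) f : sumR l (fun i => - f i) = - sumR l f.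
Proof. induction l; simpl; try ring. rewrite IHl; ring. Qed.
Lemma sumR_le {I} (l : list I) f g : (forall i, f i <= g i) -> sumR l f <= sumR l g.
Proof. intros H; induction l; simpl; try lra. specialize (H a); lra. Qed.
Lemma sumR_le_in {I} (l : list I) f g : (forall i, In i l -> f i <= g i) -> sumR l f <= sumR l g.
Proof. intros H; induction l; simpl; try lra.
  assert (f a <= g a) by (apply H; left; auto).
  assert (sumR l f <= sumR l g) by (apply IHl; intros; apply H; right; auto). lra. Qed.
Lemma sumR_nonneg {I} (l : list I) f : (forall i, 0 <= f i) -> 0 <= sumR l f.
Proof. intros H; induction l; simpl; try lra. specialize (H a); lra. Qed.
Lemma sumR_zero {I} (l : list I) : sumR l (fun _ => 0) = 0.
Proof. induction l; simpl; auto. rewrite IHl; ring. Qed.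
Lemma sumR_swap {I J} (l1 : list I) (l2 : list J) f :
  sumR l1 (fun i => sumR l2 (fun j => f i j)) = sumR l2 (fun j => sumR l1 (fun i => f i j)).
Proof. induction l1; simpl. rewrite sumR_zero; auto.
  rewrite IHl1, <- sumR_add; reflexivity. Qed.
Lemma sumR_app {I} (l1 l2 : list I) f : sumR (l1 ++ l2) f = sumR l1 f + sumR l2 f.
Proof. induction l1; simpl; try ring. rewrite IHl1; ring. Qed.

Lemma Cnorm2_nonneg z : 0 <= Cnorm2 z.
Proof. unfold Cnorm2; nra. Qed.

Lemma sumR_enumB f : sumR enumB f = f false + f true.
Proof. simpl; ring. Qed.
Lemma sumC_enumB f : sumC enumB f = Cadd (f false) (f true).
Proof. cxring. Qed.
Lemma sumR_enum3 f : sumR enum3 f =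
  sumR enumB (fun a => sumR enumB (fun b => sumR enumB (fun c => f (a, b, c)))).
Proof. simpl; ring. Qed.
Lemma sumC_enum3 f : sumC enum3 f =
  sumC enumB (fun a => sumC enumB (fun b => sumC enumB (fun c => f (a, b, c)))).
Proof. apply Cx_ext; simpl; ring. Qed.

Definition sv := / sqrt 5.
Definition mp := (1 + sv) / 2.
Definition mm := (1 - sv) / 2.
Definition rp := sqrt mp.
Definition rm := sqrt mm.

Lemma sqrt5_pos : 0 < sqrt 5.
Proof. apply sqrt_lt_R0; lra. Qed.
Lemma sqrt5_sq : sqrt 5 * sqrt 5 = 5.
Proof. apply sqrt_sqrt; lra. Qed.
Lemma sqrt5_gt2 : 2 < sqrt 5.
Proof. pose proof sqrt5_sq; pose proof sqrt5_pos; nra. Qed.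
Lemma sv_sq : sv * sv = / 5.
Proof. unfold sv. rewrite <- Rinv_mult, sqrt5_sq; reflexivity. Qed.
Lemma sv_pos : 0 < sv.
Proof. unfold sv; apply Rinv_0_lt_compat, sqrt5_pos. Qed.
Lemma sv_lt_half : sv < / 2.
Proof. unfold sv. apply Rinv_lt_contravar. pose proof sqrt5_pos; lra. exact sqrt5_gt2. Qed.
Lemma mp_pos : 0 < mp. Proof. pose proof sv_pos; unfold mp; lra. Qed.
Lemma mm_pos : 0 < mm. Proof. pose proof sv_lt_half; unfold mm; lra. Qed.
Lemma mp_mm : mp + mm = 1. Proof. unfold mp, mm; lra. Qed.
Lemma mp_lt1 : mp < 1. Proof. pose proof mm_pos; pose proof mp_mm; lra. Qed.
Lemma mm_lt1 : mm < 1. Proof. pose proof mp_pos; pose proof mp_mm; lra. Qed.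
Lemma mpmm : mp * mm = / 5.
Proof. unfold mp, mm. pose proof sv_sq. replace ((1 + sv) / 2 * ((1 - sv) / 2)) with ((1 - sv*sv)/4) by field.
  rewrite H. field. Qed.
Lemma mp_minus_mm : mp - mm = sv. Proof. unfold mp, mm; field. Qed.
Lemma rp_sq : rp * rp = mp. Proof. apply sqrt_sqrt; pose proof mp_pos; lra. Qed.
Lemma rm_sq : rm * rm = mm. Proof. apply sqrt_sqrt; pose proof mm_pos; lra. Qed.
Lemma rp_pos : 0 < rp. Proof. apply sqrt_lt_R0, mp_pos. Qed.
Lemma rm_pos : 0 < rm. Proof. apply sqrt_lt_R0, mm_pos. Qed.
Lemma rprm : rp * rm = sv.
Proof. unfold rp, rm. rewrite <- sqrt_mult by (pose proof mp_pos; pose proof mm_pos; lra).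
  rewrite mpmm. unfold sv. rewrite sqrt_inv. reflexivity. Qed.
Lemma rp2rm2 : rp * rp + rm * rm = 1. Proof. rewrite rp_sq, rm_sq; apply mp_mm. Qed.

Lemma x0_eq : (1 + / sqrt 5) / 2 = mp. Proof. reflexivity. Qed.
Lemma x0c_eq : 1 - (1 + / sqrt 5) / 2 = mm. Proof. unfold mm, sv; lra. Qed.

Definition cp (c : bool) : R := if c then rp else rm.
Definition cm (c : bool) : R := if c then - rm else rp.
Definition cpv : bool -> Cx := fun c => RtoC (cp c).
Definition cmv : bool -> Cx := fun c => RtoC (cm c).
Definition cb (k : bool) : bool -> Cx := if k then cmv else cpv.

Lemma Omega_decomp a b c :
  Omega a b c = RtoC (rp * cp a * cp b * cp c + rm * cm a * cm b * cm c).
Proof.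
  pose proof rp_sq; pose proof rm_sq; pose proof rprm; pose proof mp_mm; pose proof mp_minus_mm.
  destruct a, b, c; simpl; unfold RtoC, Defs.C0; f_equal; fold sv; try nra.
Qed.

Lemma ln_le_x1 x : 0 < x -> ln x <= x - 1.
Proof. intros Hx. pose proof (exp_ineq1_le (ln x)). rewrite exp_ln in H by lra. lra. Qed.
Lemma ln_le_mono x y : 0 < x -> x <= y -> ln x <= ln y.
Proof. intros Hx Hxy. destruct (Req_dec x y). subst; lra.
  left; apply ln_increasing; lra. Qed.
Lemma ln2_pos : 0 < ln 2.
Proof. rewrite <- ln_1. apply ln_increasing; lra. Qed.

Definition hl (p : R) : R := if Req_dec_T p 0 then 0 else - p * ln p.
Lemma hterm_hl p : hterm p = hl p / ln 2.
Proof. unfold hterm, hl, log2. destruct (Req_dec_T p 0). unfold Rdiv; ring.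
  field. pose proof ln2_pos; lra. Qed.
Lemma hl_0 : hl 0 = 0.
Proof. unfold hl; destruct (Req_dec_T 0 0); auto; lra. Qed.
Lemma hl_pos p : p <> 0 -> hl p = - p * ln p.
Proof. unfold hl; destruct (Req_dec_T p 0); auto; lra. Qed.
Lemma hterm_0 : hterm 0 = 0.
Proof. rewrite hterm_hl, hl_0; unfold Rdiv; ring. Qed.

Lemma hl_sub x y : 0 <= x -> 0 <= y -> hl (x + y) <= hl x + hl y.
Proof.
  intros Hx Hy. destruct (Req_dec x 0). subst. rewrite hl_0, Rplus_0_l; lra.
  destruct (Req_dec y 0). subst. rewrite hl_0, Rplus_0_r; lra.
  rewrite !hl_pos by lra.
  assert (ln x <= ln (x + y)) by (apply ln_le_mono; lra).
  assert (ln y <= ln (x + y)) by (apply ln_le_mono; lra).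
  nra.
Qed.
Lemma hterm_sub x y : 0 <= x -> 0 <= y -> hterm (x + y) <= hterm x + hterm y.
Proof. intros. rewrite !hterm_hl. pose proof ln2_pos. pose proof (hl_sub x y H H0).
  unfold Rdiv. rewrite <- Rmult_plus_distr_r. apply Rmult_le_compat_r; auto.
  left; apply Rinv_0_lt_compat; auto. Qed.

Lemma hl_conc m1 m2 a b : 0 < m1 -> 0 < m2 -> 0 <= a -> 0 <= b -> a + b <= 1 ->
  a * hl m1 + b * hl m2 <= hl (m1 * a + m2 * b).
Proof.
  intros H1 H2 Ha Hb Hab.
  destruct (Req_dec (m1 * a + m2 * b) 0) as [E|E].
  - assert (a = 0) by nra. assert (b = 0) by nra. subst. replace (m1 * 0 + m2 * 0) with 0 by ring. rewrite hl_0; lra.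
  - set (q := m1 * a + m2 * b) in *.
    assert (Hq : 0 < q) by (unfold q in *; nra).
    rewrite !hl_pos by lra.
    assert (L1 : ln (q / m1) <= q / m1 - 1) by (apply ln_le_x1; apply Rdiv_lt_0_compat; lra).
    assert (L2 : ln (q / m2) <= q / m2 - 1) by (apply ln_le_x1; apply Rdiv_lt_0_compat; lra).
    unfold Rdiv in L1, L2. rewrite ln_mult, ln_Rinv in L1, L2 by (try apply Rinv_0_lt_compat; lra).
    assert (E1 : a * m1 * (ln q - ln m1) <= a * m1 * (q * / m1 - 1)) by (apply Rmult_le_compat_l; nra).
    assert (E2 : b * m2 * (ln q - ln m2) <= b * m2 * (q * / m2 - 1)) by (apply Rmult_le_compat_l; nra).
    replace (a * m1 * (q * / m1 - 1)) with (a * q - a * m1) in E1 by (field; lra).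
    replace (b * m2 * (q * / m2 - 1)) with (b * q - b * m2) in E2 by (field; lra).
    assert (q * (a + b) <= q) by nra.
    assert (q = m1 * a + m2 * b) by reflexivity. nra.
Qed.

Lemma hterm_conc m1 m2 a b : 0 < m1 -> 0 < m2 -> 0 <= a -> 0 <= b -> a + b <= 1 ->
  a * hterm m1 + b * hterm m2 <= hterm (m1 * a + m2 * b).
Proof. intros. rewrite !hterm_hl. pose proof ln2_pos. pose proof (hl_conc m1 m2 a b H H0 H1 H2 H3).
  unfold Rdiv. replace (a * (hl m1 * / ln 2) + b * (hl m2 * / ln 2)) with
   ((a * hl m1 + b * hl m2) * / ln 2) by ring.
  apply Rmult_le_compat_r; auto. left; apply Rinv_0_lt_compat; auto. Qed.

Definition ov (u v : bool -> Cx) : R := Cnorm2 (inner enumB u v).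

Lemma parseval_ov f (Hf : qubit_ONB f) u :
  sumR enumB (fun i => ov (f i) u) = sumR enumB (fun a => Cnorm2 (u a)).
Proof.
  pose proof (complete2 f Hf) as K.
  assert (E : sumR enumB (fun i => ov (f i) u) =
     re (sumC enumB (fun a => sumC enumB (fun b => Cmul (Cmul (Cconj (u a)) (u b))
        (sumC enumB (fun k => Cmul (f k a) (Cconj (f k b)))))))).
  { unfold ov. cunf. ring. }
  rewrite E. rewrite (sumC_ext _ _ (fun a => sumC enumB (fun b => Cmul (Cmul (Cconj (u a)) (u b))
        (if Bool.eqb a b then Defs.C1 else Defs.C0)))).
  2:{ intros a. apply sumC_ext. intros b. rewrite K. reflexivity. }
  cunf. ring.
Qed.

Lemma ov_sym u v : ov u v = ov v u.
Proof. unfold ov; cunf; ring. Qed.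
Lemma ov_nonneg u v : 0 <= ov u v.
Proof. apply Cnorm2_nonneg. Qed.

Lemma onb_norm f (Hf : qubit_ONB f) i : sumR enumB (fun a => Cnorm2 (f i a)) = 1.
Proof. pose proof (Hf i i) as H. unfold inner in H. destruct i; simpl in H;
  apply (f_equal re) in H; cunf; lra. Qed.

Lemma cb_onb : qubit_ONB cb.
Proof.
  pose proof rp2rm2. unfold qubit_ONB, orthonormal. intros i j.
  destruct i, j; simpl; apply Cx_ext; unfold cb, cpv, cmv, cp, cm; cunf; nra.
Qed.

Lemma cpv_norm : sumR enumB (fun a => Cnorm2 (cpv a)) = 1.
Proof. apply (onb_norm cb cb_onb false). Qed.
Lemma cmv_norm : sumR enumB (fun a => Cnorm2 (cmv a)) = 1.
Proof. apply (onb_norm cb cb_onb true). Qed.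

Lemma ov_cpm f (Hf : qubit_ONB f) i : ov (f i) cpv + ov (f i) cmv = 1.
Proof. rewrite (ov_sym _ cpv), (ov_sym _ cmv).
  pose proof (parseval_ov cb cb_onb (f i)). rewrite (onb_norm f Hf i) in H.
  simpl in H. lra. Qed.

Definition amp2 (f g : bool -> Cx) (c : bool) : Cx :=
  sumC enumB (fun a => sumC enumB (fun b => Cmul (Cmul (Cconj (f a)) (Cconj (g b))) (Omega a b c))).
Definition pr (f g : bool -> Cx) : R := sumR enumB (fun c => Cnorm2 (amp2 f g c)).

Lemma amp2_decomp f g c : amp2 f g c =
  Cadd (Cmul (Cmul (RtoC rp) (Cmul (inner enumB f cpv) (inner enumB g cpv))) (RtoC (cp c)))
       (Cmul (Cmul (RtoC rm) (Cmul (inner enumB f cmv) (inner enumB g cmv))) (RtoC (cm c))).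
Proof.
  unfold amp2. rewrite (sumC_ext _ _ (fun a => sumC enumB (fun b =>
    Cmul (Cmul (Cconj (f a)) (Cconj (g b))) (RtoC (rp * cp a * cp b * cp c + rm * cm a * cm b * cm c))))).
  2:{ intros a; apply sumC_ext; intros b; rewrite Omega_decomp; reflexivity. }
  unfold cpv, cmv, cp, cm. cxring.
Qed.

Lemma sum_c_norm A B : sumR enumB (fun c => Cnorm2 (Cadd (Cmul A (RtoC (cp c))) (Cmul B (RtoC (cm c)))))
  = Cnorm2 A + Cnorm2 B.
Proof.
  transitivity ((rp * rp + rm * rm) * (Cnorm2 A + Cnorm2 B)).
  - unfold cp, cm; cunf; ring.
  - rewrite rp2rm2; ring.
Qed.

Lemma Cnorm2_mul z w : Cnorm2 (Cmul z w) = Cnorm2 z * Cnorm2 w.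
Proof. cunf; ring. Qed.
Lemma Cnorm2_RtoC r : Cnorm2 (RtoC r) = r * r.
Proof. cunf; ring. Qed.

Lemma pr_formula f g : pr f g = mp * (ov f cpv * ov g cpv) + mm * (ov f cmv * ov g cmv).
Proof.
  unfold pr. rewrite (sumR_ext _ _ (fun c => Cnorm2 (Cadd
     (Cmul (Cmul (RtoC rp) (Cmul (inner enumB f cpv) (inner enumB g cpv))) (RtoC (cp c)))
     (Cmul (Cmul (RtoC rm) (Cmul (inner enumB f cmv) (inner enumB g cmv))) (RtoC (cm c)))))).
  2:{ intros c; rewrite amp2_decomp; reflexivity. }
  rewrite sum_c_norm. rewrite !Cnorm2_mul, !Cnorm2_RtoC, rp_sq, rm_sq. unfold ov. ring.
Qed.

Definition Hstar := hterm mp + hterm mm.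

Lemma LB_Q (f : bool -> bool -> Cx) (g : bool -> bool -> bool -> Cx) :
  qubit_ONB f -> (forall i, qubit_ONB (g i)) ->
  Hstar <= sumR enumB (fun i1 => sumR enumB (fun i2 => hterm (pr (f i1) (g i1 i2)))).
Proof.
  intros Hf Hg.
  assert (Hterm : forall i1 i2,
    ov (f i1) cpv * ov (g i1 i2) cpv * hterm mp + ov (f i1) cmv * ov (g i1 i2) cmv * hterm mm
    <= hterm (pr (f i1) (g i1 i2))).
  { intros i1 i2. rewrite pr_formula. apply hterm_conc.
    - exact mp_pos. - exact mm_pos.
    - apply Rmult_le_pos; apply ov_nonneg.
    - apply Rmult_le_pos; apply ov_nonneg.
    - pose proof (ov_cpm f Hf i1). pose proof (ov_cpm (g i1) (Hg i1) i2).
      pose proof (ov_nonneg (f i1) cpv). pose proof (ov_nonneg (f i1) cmv).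
      pose proof (ov_nonneg (g i1 i2) cpv). pose proof (ov_nonneg (g i1 i2) cmv). nra. }
  eapply Rle_trans; [| apply sumR_le; intros i1; apply sumR_le; intros i2; apply Hterm].
  pose proof (parseval_ov f Hf cpv) as P1. pose proof (parseval_ov f Hf cmv) as P2.
  pose proof (parseval_ov (g false) (Hg false) cpv) as P3. pose proof (parseval_ov (g false) (Hg false) cmv) as P4.
  pose proof (parseval_ov (g true) (Hg true) cpv) as P5. pose proof (parseval_ov (g true) (Hg true) cmv) as P6.
  rewrite cpv_norm in P1, P3, P5. rewrite cmv_norm in P2, P4, P6.
  simpl in *. unfold Hstar.
  transitivity (hterm mp * (ov (f false) cpv * (ov (g false false) cpv + (ov (g false true) cpv + 0)) +
      (ov (f true) cpv * (ov (g true false) cpv + (ov (g true true) cpv + 0)) + 0)) +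
      hterm mm * (ov (f false) cmv * (ov (g false false) cmv + (ov (g false true) cmv + 0)) +
      (ov (f true) cmv * (ov (g true false) cmv + (ov (g true true) cmv + 0)) + 0))).
  - rewrite P3, P4, P5, P6. rewrite !Rmult_1_r. rewrite P1, P2. lra.
  - right; ring.
Qed.

Lemma Omega_sym S (HS : valid_scheme S) y1 y2 y3 :
  Omega (assign S y1 y2 y3 PA) (assign S y1 y2 y3 PB) (assign S y1 y2 y3 PC) = Omega y1 y2 y3.
Proof.
  destruct HS as [H12 [H13 [H23 _]]]. unfold assign.
  destruct (ord1 S), (ord2 S), (ord3 S); try congruence; destruct y1, y2, y3; reflexivity.
Qed.

Lemma amp_reorg S (HS : valid_scheme S) i1 i2 i3 :
  scheme_amp S Omega i1 i2 i3 = inner enumB (ph3 S i1 i2 i3) (amp2 (ph1 S i1) (ph2 S i1 i2)).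
Proof.
  unfold scheme_amp.
  rewrite (sumC_ext _ _ (fun y1 => sumC enumB (fun y2 => sumC enumB (fun y3 =>
    Cmul (Cmul (Cmul (Cconj (ph1 S i1 y1)) (Cconj (ph2 S i1 i2 y2))) (Cconj (ph3 S i1 i2 i3 y3)))
         (Omega y1 y2 y3))))).
  2:{ intros y1; apply sumC_ext; intros y2; apply sumC_ext; intros y3. rewrite Omega_sym by exact HS. reflexivity. }
  unfold amp2. generalize Omega; intros Om. cxring.
Qed.

Lemma parseval_sum f (Hf : qubit_ONB f) u :
  sumR enumB (fun i => Cnorm2 (inner enumB (f i) u)) = sumR enumB (fun a => Cnorm2 (u a)).
Proof. apply (parseval_ov f Hf u). Qed.

Lemma EMB_lower S : valid_scheme S -> Hstar <= scheme_entropy S Omega.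
Proof.
  intros HS. pose proof HS as HS'. destruct HS' as [_ [_ [_ [H1 [H2 H3]]]]].
  eapply Rle_trans. apply (LB_Q (ph1 S) (ph2 S) H1 H2).
  unfold scheme_entropy. apply sumR_le; intros i1; apply sumR_le; intros i2.
  assert (E : pr (ph1 S i1) (ph2 S i1 i2) =
     scheme_prob S Omega i1 i2 false + scheme_prob S Omega i1 i2 true).
  { unfold scheme_prob. rewrite !amp_reorg by exact HS.
    pose proof (parseval_sum (ph3 S i1 i2) (H3 i1 i2) (amp2 (ph1 S i1) (ph2 S i1 i2))) as P.
    simpl in P. unfold pr. simpl. lra. }
  rewrite E. simpl. pose proof (hterm_sub (scheme_prob S Omega i1 i2 false) (scheme_prob S Omega i1 i2 true)).
  unfold scheme_prob in *. pose proof (Cnorm2_nonneg (scheme_amp S Omega i1 i2 false)).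
  pose proof (Cnorm2_nonneg (scheme_amp S Omega i1 i2 true)). lra.
Qed.

Lemma amp3 f g k : inner enumB k (amp2 f g) =
  Cadd (Cmul (RtoC rp) (Cmul (Cmul (inner enumB f cpv) (inner enumB g cpv)) (inner enumB k cpv)))
       (Cmul (RtoC rm) (Cmul (Cmul (inner enumB f cmv) (inner enumB g cmv)) (inner enumB k cmv))).
Proof.
  unfold inner at 1. rewrite (sumC_ext _ _ (fun c => Cmul (Cconj (k c)) (Cadd
    (Cmul (Cmul (RtoC rp) (Cmul (inner enumB f cpv) (inner enumB g cpv))) (RtoC (cp c)))
    (Cmul (Cmul (RtoC rm) (Cmul (inner enumB f cmv) (inner enumB g cmv))) (RtoC (cm c)))))).
  2:{ intros c; rewrite amp2_decomp; reflexivity. }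
  unfold cpv, cmv. generalize (inner enumB f (fun c => RtoC (cp c))), (inner enumB g (fun c => RtoC (cp c))),
    (inner enumB f (fun c => RtoC (cm c))), (inner enumB g (fun c => RtoC (cm c))). intros.
  cxring.
Qed.

Lemma inner_cb_p i : inner enumB (cb i) cpv = if i then Defs.C0 else Defs.C1.
Proof. pose proof (cb_onb i false). simpl in H. destruct i; exact H. Qed.
Lemma inner_cb_m i : inner enumB (cb i) cmv = if i then Defs.C1 else Defs.C0.
Proof. pose proof (cb_onb i true). simpl in H. destruct i; exact H. Qed.

Definition S0 : Scheme := mkScheme PA PB PC cb (fun _ => cb) (fun _ _ => cb).
Lemma S0_valid : valid_scheme S0.
Proof. repeat split; try discriminate; try apply cb_onb; intros; apply cb_onb. Qed.

Lemma hterm_mp_eq : H2 ((1 + / sqrt 5) / 2) = Hstar.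
Proof. unfold H2, Hstar. rewrite x0c_eq. reflexivity. Qed.

Lemma EMB_exists : scheme_entropy S0 Omega = Hstar.
Proof.
  unfold scheme_entropy, scheme_prob. 
  assert (E : forall i1 i2 i3, scheme_amp S0 Omega i1 i2 i3 =
    Cadd (Cmul (RtoC rp) (Cmul (Cmul (inner enumB (cb i1) cpv) (inner enumB (cb i2) cpv)) (inner enumB (cb i3) cpv)))
       (Cmul (RtoC rm) (Cmul (Cmul (inner enumB (cb i1) cmv) (inner enumB (cb i2) cmv)) (inner enumB (cb i3) cmv)))).
  { intros. rewrite amp_reorg by apply S0_valid. simpl. apply amp3. }
  rewrite (sumR_ext _ _ (fun i1 => sumR enumB (fun i2 => sumR enumB (fun i3 =>
     hterm (Cnorm2 (Cadd (Cmul (RtoC rp) (Cmul (Cmul (inner enumB (cb i1) cpv) (inner enumB (cb i2) cpv)) (inner enumB (cb i3) cpv)))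
       (Cmul (RtoC rm) (Cmul (Cmul (inner enumB (cb i1) cmv) (inner enumB (cb i2) cmv)) (inner enumB (cb i3) cmv))))))))).
  2:{ intros; apply sumR_ext; intros; apply sumR_ext; intros; rewrite E; reflexivity. }
  rewrite !sumR_enumB. rewrite !inner_cb_p, !inner_cb_m.
  unfold Hstar.
  assert (A1 : Cnorm2 (Cadd (Cmul (RtoC rp) (Cmul (Cmul Defs.C1 Defs.C1) Defs.C1))
     (Cmul (RtoC rm) (Cmul (Cmul Defs.C0 Defs.C0) Defs.C0))) = mp).
  { rewrite <- rp_sq. cunf. ring. }
  assert (A2 : Cnorm2 (Cadd (Cmul (RtoC rp) (Cmul (Cmul Defs.C0 Defs.C0) Defs.C0))
     (Cmul (RtoC rm) (Cmul (Cmul Defs.C1 Defs.C1) Defs.C1))) = mm).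
  { rewrite <- rm_sq. cunf. ring. }
  assert (Z : forall a b c d e f, (a = Defs.C0 \/ b = Defs.C0 \/ c = Defs.C0) ->
     (d = Defs.C0 \/ e = Defs.C0 \/ f = Defs.C0) ->
     Cnorm2 (Cadd (Cmul (RtoC rp) (Cmul (Cmul a b) c)) (Cmul (RtoC rm) (Cmul (Cmul d e) f))) = 0).
  { intros a b c d e f Ha Hd. destruct Ha as [ -> | [ -> | -> ] ]; destruct Hd as [ -> | [ -> | -> ] ]; cunf; ring. }
  rewrite A1, A2. rewrite !Z by (first [left; reflexivity | right; left; reflexivity | right; right; reflexivity]).
  rewrite hterm_0. ring.
Qed.

Lemma IsEMB_Omega : IsEMB Omega Hstar.
Proof. split. exists S0. split. apply S0_valid. apply EMB_exists.
  intros S HS. apply EMB_lower; exact HS. Qed.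

Lemma hmin_pr al be l m : hmin_prob al be Omega l m = pr (al l) (be m).
Proof. reflexivity. Qed.

Lemma IsEHmin_Omega : IsEHmin Omega Hstar.
Proof.
  split.
  - exists cb, cb. split. apply cb_onb. split. apply cb_onb.
    unfold hmin_entropy. rewrite (sumR_ext _ _ (fun l => sumR enumB (fun m => hterm (pr (cb l) (cb m))))).
    2:{ intros; apply sumR_ext; intros; rewrite hmin_pr; reflexivity. }
    rewrite !sumR_enumB. rewrite !pr_formula. unfold ov. rewrite !inner_cb_p, !inner_cb_m.
    unfold Hstar. cunf. 
    replace (mp * ((1 * 1 + 0 * 0) * (1 * 1 + 0 * 0)) + mm * ((0 * 0 + 0 * 0) * (0 * 0 + 0 * 0))) with mp by ring.
    replace (mp * ((0 * 0 + 0 * 0) * (0 * 0 + 0 * 0)) + mm * ((1 * 1 + 0 * 0) * (1 * 1 + 0 * 0))) with mm by ring.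
    replace (mp * ((1 * 1 + 0 * 0) * (0 * 0 + 0 * 0)) + mm * ((0 * 0 + 0 * 0) * (1 * 1 + 0 * 0))) with 0 by ring.
    replace (mp * ((0 * 0 + 0 * 0) * (1 * 1 + 0 * 0)) + mm * ((1 * 1 + 0 * 0) * (0 * 0 + 0 * 0))) with 0 by ring.
    rewrite hterm_0. ring.
  - intros al be Ha Hb. unfold hmin_entropy.
    rewrite (sumR_ext _ _ (fun l => sumR enumB (fun m => hterm (pr (al l) (be m))))).
    2:{ intros; apply sumR_ext; intros; rewrite hmin_pr; reflexivity. }
    apply (LB_Q al (fun _ => be) Ha (fun _ => Hb)).
Qed.

Definition lamC (k : bool) : R := if k then mm else mp.

Lemma rho_spec i j : rhoC Omega i j =
  sumC enumB (fun k => Cmul (RtoC (lamC k)) (Cmul (cb k i) (Cconj (cb k j)))).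
Proof.
  unfold rhoC. rewrite (sumC_ext _ _ (fun a => sumC enumB (fun b =>
    Cmul (RtoC (rp * cp a * cp b * cp i + rm * cm a * cm b * cm i))
         (Cconj (RtoC (rp * cp a * cp b * cp j + rm * cm a * cm b * cm j)))))).
  2:{ intros a; apply sumC_ext; intros b; rewrite !Omega_decomp; reflexivity. }
  apply Cx_ext.
  - transitivity ((rp*rp) * cp i * cp j * ((rm*rm+rp*rp)*(rm*rm+rp*rp)) + (rm*rm) * cm i * cm j * ((rp*rp+rm*rm)*(rp*rp+rm*rm))).
    + unfold cp at 1 2 3 4 5 6 7 8, cm at 1 2 3 4 5 6 7 8. cunf. ring.
    + replace (rm*rm+rp*rp) with 1 by (rewrite Rplus_comm; symmetry; apply rp2rm2). rewrite rp2rm2, rp_sq, rm_sq. unfold lamC, cb, cpv, cmv. cunf. ring.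
  - unfold lamC, cb, cpv, cmv. cunf. ring.
Qed.

Lemma rho_vals i j : rhoC Omega i j =
  RtoC (if i then (if j then 3/5 else 1/5) else (if j then 1/5 else 2/5)).
Proof.
  pose proof sv_sq. destruct i, j; apply Cx_ext; cunf; unfold Defs.C0; simpl; fold sv; lra.
Qed.

Lemma VN_unique e lam : spectral2 (rhoC Omega) e lam ->
  sumR enumB (fun k => hterm (lam k)) = Hstar.
Proof.
  intros [He Hs].
  assert (T : lam false + lam true = 1).
  { assert (E : re (Cadd (rhoC Omega false false) (rhoC Omega true true)) =
       lam false * sumR enumB (fun a => Cnorm2 (e false a)) + lam true * sumR enumB (fun a => Cnorm2 (e true a))).
    { rewrite !Hs. cunf. ring. }
    rewrite !onb_norm in E by exact He. rewrite !rho_vals in E. cunf. lra. }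
  assert (Q : lam false * lam false + lam true * lam true = 3/5).
  { assert (E : re (sumC enumB (fun i => sumC enumB (fun j => Cmul (rhoC Omega i j) (rhoC Omega j i)))) =
      sumR enumB (fun k => sumR enumB (fun l => lam k * lam l * Cnorm2 (inner enumB (e k) (e l))))).
    { rewrite (sumC_ext _ _ (fun i => sumC enumB (fun j => Cmul
         (sumC enumB (fun k => Cmul (RtoC (lam k)) (Cmul (e k i) (Cconj (e k j)))))
         (sumC enumB (fun k => Cmul (RtoC (lam k)) (Cmul (e k j) (Cconj (e k i)))))))).
      2:{ intros i; apply sumC_ext; intros j; rewrite !Hs; reflexivity. }
      cunf. ring. }
    rewrite (sumC_ext _ _ (fun i : bool => sumC enumB (fun j : bool => Cmul (RtoC (if i then (if j then 3/5 else 1/5) else (if j then 1/5 else 2/5)))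
        (RtoC (if j then (if i then 3/5 else 1/5) else (if i then 1/5 else 2/5)))))) in E.
    2:{ intros i; apply sumC_ext; intros j; rewrite !rho_vals; reflexivity. }
    rewrite !sumR_enumB in E. rewrite !He in E. simpl in E. cunf. lra. }
  assert (R0 : (lam false - mp) * (lam false - mm) = 0).
  { pose proof mp_mm; pose proof mpmm. 
    replace ((lam false - mp) * (lam false - mm)) with (lam false * lam false - lam false * (mp + mm) + mp * mm) by ring.
    rewrite H, H0. assert (lam true = 1 - lam false) by lra. rewrite H1 in Q. lra. }
  rewrite sumR_enumB. unfold Hstar.
  apply Rmult_integral in R0. destruct R0 as [R0|R0].
  - assert (lam false = mp) by lra. assert (lam true = mm) by (pose proof mp_mm; lra).
    rewrite H, H0; ring.
  - assert (lam false = mm) by lra. assert (lam true = mp) by (pose proof mp_mm; lra).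
    rewrite H, H0; ring.
Qed.

Lemma IsVN_Omega : IsVNEntropyC Omega Hstar.
Proof.
  split.
  - exists cb, lamC. split. apply cb_onb. intros; apply rho_spec.
  - intros e lam H; exact (VN_unique e lam H).
Qed.

Module CQ.
Import Coquelicot.Coquelicot.
Lemma mono_deriv (f df : R -> R) a b : a <= b ->
  (forall x, a <= x <= b -> is_derive f x (df x)) ->
  (forall x, a <= x <= b -> 0 <= df x) -> f a <= f b.
Proof.
  intros Hab Hd Hp. destruct (Req_dec a b). subst; lra.
  destruct (MVT_gen f a b df) as [c [Hc E]].
  - intros x Hx. rewrite Rmin_left, Rmax_right in Hx by lra. apply Hd; lra.
  - intros x Hx. rewrite Rmin_left, Rmax_right in Hx by lra. apply continuity_pt_filterlim.
    apply (ex_derive_continuous (K := R_AbsRing) (V := R_NormedModule) f x). exists (df x). apply Hd; lra.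
  - rewrite Rmin_left, Rmax_right in Hc by lra. specialize (Hp c Hc). nra.
Qed.

Definition Pz (z : R) := 2 * (z + z^3/3 + z^5/5 + z^7/7 + z^9/9 + z^11/11).

Lemma Lser_low z : 0 <= z < 1 -> Pz z <= ln (1 + z) - ln (1 - z).
Proof.
  intros Hz.
  assert (H := mono_deriv (fun x => ln (1 + x) - ln (1 - x) - Pz x) (fun x => 2 * x^12 / (1 - x^2)) 0 z).
  cbv beta in H. replace (ln (1 + 0) - ln (1 - 0) - Pz 0) with 0 in H by (unfold Pz; rewrite Rplus_0_r, Rminus_0_r, ln_1; field).
  cut (0 <= ln (1 + z) - ln (1 - z) - Pz z). lra.
  apply H; [lra| |].
  - intros x Hx. unfold Pz. auto_derive. lra. field. split; nra.
  - intros x Hx. apply Rmult_le_pos. apply Rmult_le_pos. lra. apply pow_le; lra.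
    left; apply Rinv_0_lt_compat; nra.
Qed.

Lemma Lser_up z : 0 <= z < 1 -> ln (1 + z) - ln (1 - z) <= Pz z + 2 * z^13 / (13 * (1 - z^2)).
Proof.
  intros Hz.
  assert (H := mono_deriv (fun x => 2 * x^13 / (13 * (1 - z^2)) - (ln (1 + x) - ln (1 - x) - Pz x))
     (fun x => 2 * x^12 / (1 - z^2) - 2 * x^12 / (1 - x^2)) 0 z).
  cbv beta in H. replace (2 * 0^13 / (13 * (1 - z^2)) -
      (ln (1 + 0) - ln (1 - 0) - Pz 0)) with 0 in H.
  2:{ unfold Pz; rewrite Rplus_0_r, Rminus_0_r, ln_1. field. nra. }
  cut (0 <= 2 * z^13 / (13 * (1 - z^2)) - (ln (1 + z) - ln (1 - z) - Pz z)). lra.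
  apply H; [lra| |].
  - intros x Hx. unfold Pz. auto_derive. lra. field. split; nra.
  - intros x Hx. 
    assert (0 <= x^12) by (apply pow_le; lra).
    assert (0 < 1 - z^2) by nra. assert (1 - z^2 <= 1 - x^2) by nra.
    assert (/ (1 - x^2) <= / (1 - z^2)) by (apply Rinv_le_contravar; lra).
    unfold Rdiv. nra.
Qed.
End CQ.

Definition Pz := CQ.Pz.
Lemma ln_ratio z : 0 <= z < 1 -> ln ((1 + z) / (1 - z)) = ln (1 + z) - ln (1 - z).
Proof. intros. unfold Rdiv. rewrite ln_mult, ln_Rinv by (try apply Rinv_0_lt_compat; lra). ring. Qed.

Lemma ln_of_ratio z r : 0 <= z < 1 -> r = (1 + z) / (1 - z) ->
  Pz z <= ln r <= Pz z + 2 * z^13 / (13 * (1 - z^2)).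
Proof. intros Hz ->. rewrite ln_ratio by lra. split. apply CQ.Lser_low; lra. apply CQ.Lser_up; lra. Qed.

Lemma ln2_b : 6931470737/10000000000 <= ln 2 <= 6931471824/10000000000.
Proof. destruct (ln_of_ratio (1/3) 2) as [A B]; [lra | field |].
  unfold Pz, CQ.Pz in *. split; lra. Qed.

Lemma ln54_b : 2231435513/10000000000 <= ln (5/4) <= 2231435514/10000000000.
Proof. destruct (ln_of_ratio (1/9) (5/4)) as [A B]; [lra | field |].
  unfold Pz, CQ.Pz in *. split; lra. Qed.

Lemma lnm1_b : - (3235071313/10000000000) <= ln (7236067977/10000000000).
Proof.
  destruct (ln_of_ratio (2763932023/17236067977) (/ (7236067977/10000000000))) as [A B]; [lra | field |].
  rewrite ln_Rinv in B by lra. unfold Pz, CQ.Pz in *. lra. Qed.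

Lemma lnm2_b : ln (3618033989/5000000000) <= - (323507131/1000000000).
Proof.
  destruct (ln_of_ratio (1381966011/8618033989) (/ (3618033989/5000000000))) as [A B]; [lra | field |].
  rewrite ln_Rinv in A by lra. unfold Pz, CQ.Pz in *. lra. Qed.

Lemma sv_b : 4472135954/10000000000 < sv < 4472135956/10000000000.
Proof. pose proof sv_sq; pose proof sv_pos. split; nra. Qed.

Lemma lnmp_b : - (3235071313/10000000000) <= ln mp <= - (323507131/1000000000).
Proof.
  pose proof sv_b. split.
  - eapply Rle_trans. apply lnm1_b. apply ln_le_mono. lra. unfold mp; lra.
  - eapply Rle_trans. 2: apply lnm2_b. apply ln_le_mono. apply mp_pos. unfold mp; lra.
Qed.

Lemma ln5_eq : ln 5 = ln (5/4) + 2 * ln 2.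
Proof. replace 5 with (5/4 * (2 * 2)) at 1 by field. rewrite !ln_mult by lra. ring. Qed.

Lemma lnmm_eq : ln mm = - (ln 5 + ln mp).
Proof.
  assert (mm = / (5 * mp)). { pose proof mpmm; pose proof mp_pos. field_simplify_eq; [|lra]. nra. }
  rewrite H, ln_Rinv, ln_mult. ring. lra. apply mp_pos. pose proof mp_pos; lra.
Qed.

Lemma Hstar_eq : Hstar = (- sv * ln mp + mm * ln 5) / ln 2.
Proof.
  unfold Hstar. rewrite !hterm_hl. rewrite !hl_pos by (pose proof mp_pos; pose proof mm_pos; lra).
  rewrite lnmm_eq. rewrite <- mp_minus_mm. field. pose proof ln2_pos; lra.
Qed.

Lemma Hstar_num : Rabs (Hstar - 8505 / 10000) < 5 / 100000.
Proof.
  rewrite Hstar_eq. pose proof ln2_b. pose proof ln54_b. pose proof lnmp_b. pose proof sv_b.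
  rewrite ln5_eq.
  assert (Hmm : mm = (1 - sv) / 2) by reflexivity.
  set (N := - sv * ln mp + mm * (ln (5/4) + 2 * ln 2)).
  assert (N1 : 85045/100000 * ln 2 < N). { unfold N. rewrite Hmm. nra. }
  assert (N2 : N < 85055/100000 * ln 2). { unfold N. rewrite Hmm. nra. }
  assert (P : 0 < ln 2) by lra.
  apply Rabs_def1.
  - apply (Rmult_lt_reg_r (ln 2)); auto. unfold Rdiv. field_simplify; lra.
  - apply (Rmult_lt_reg_r (ln 2)); auto. unfold Rdiv. field_simplify; lra.
Qed.

#[export] Instance sumC_proper {I} (l : list I) : Proper (pointwise_relation I eq ==> eq) (sumC l).
Proof. intros f g H. apply sumC_ext. exact H. Qed.
#[export] Instance sumR_proper {I} (l : list I) : Proper (pointwise_relation I eq ==> eq) (sumR l).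
Proof. intros f g H. apply sumR_ext. exact H. Qed.

Lemma sumC_add {I} (l : list I) f g : sumC l (fun i => Cadd (f i) (g i)) = Cadd (sumC l f) (sumC l g).
Proof. induction l; simpl. cxring. rewrite IHl. cxring. Qed.
Lemma sumC_scal_l {I} (l : list I) c f : sumC l (fun i => Cmul c (f i)) = Cmul c (sumC l f).
Proof. induction l; simpl. cxring. rewrite IHl. generalize (sumC l f); intros. cxring. Qed.
Lemma sumC_scal_r {I} (l : list I) c f : sumC l (fun i => Cmul (f i) c) = Cmul (sumC l f) c.
Proof. induction l; simpl. cxring. rewrite IHl. generalize (sumC l f); intros. cxring. Qed.
Lemma sumC_conj {I} (l : list I) f : Cconj (sumC l f) = sumC l (fun i => Cconj (f i)).
Proof. induction l; simpl. cxring. rewrite <- IHl. generalize (sumC l f); intros. cxring. Qed.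
Lemma sumC_zero {I} (l : list I) : sumC l (fun _ => Defs.C0) = Defs.C0.
Proof. induction l; simpl. reflexivity. rewrite IHl. cxring. Qed.
Lemma sumC_swap {I J} (l1 : list I) (l2 : list J) F :
  sumC l1 (fun i => sumC l2 (fun j => F i j)) = sumC l2 (fun j => sumC l1 (fun i => F i j)).
Proof. induction l1; simpl. rewrite sumC_zero; auto.
  rewrite IHl1, <- sumC_add; reflexivity. Qed.
Lemma sumC_mul {I J} (l1 : list I) (l2 : list J) f g :
  Cmul (sumC l1 f) (sumC l2 g) = sumC l1 (fun i => sumC l2 (fun j => Cmul (f i) (g j))).
Proof. rewrite <- sumC_scal_r. apply sumC_ext; intros i. rewrite sumC_scal_l. reflexivity. Qed.
Lemma re_RtoC_mul r z : re (Cmul (RtoC r) z) = r * re z.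
Proof. cunf; ring. Qed.
Lemma re_Cadd z w : re (Cadd z w) = re z + re w.
Proof. reflexivity. Qed.

Lemma sum_delta3 (g : Idx3 -> Cx) x :
  sumC enum3 (fun y => Cmul (g y) (if eqb3 x y then Defs.C1 else Defs.C0)) = g x.
Proof.
  destruct x as [[a b] c]; destruct a, b, c; simpl;
  generalize (g (false,false,false)) (g (false,false,true)) (g (false,true,false)) (g (false,true,true))
    (g (true,false,false)) (g (true,false,true)) (g (true,true,false)) (g (true,true,true)); intros;
  cxring.
Qed.

Definition complete8P (e : Idx3 -> Idx3 -> Cx) := forall x y,
  sumC enum3 (fun k => Cmul (e k x) (Cconj (e k y))) = if eqb3 x y then Defs.C1 else Defs.C0.

Lemma expand8 e (Hc : complete8P e) v w :
  sumC enum3 (fun k => Cmul (Cconj (inner enum3 (e k) v)) (inner enum3 (e k) w)) = inner enum3 v w.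
Proof.
  unfold inner.
  setoid_rewrite sumC_conj. setoid_rewrite sumC_mul.
  rewrite sumC_swap. apply sumC_ext; intros x. rewrite sumC_swap.
  transitivity (sumC enum3 (fun y => Cmul (Cmul (Cconj (v x)) (w y))
      (sumC enum3 (fun k => Cmul (e k x) (Cconj (e k y)))))).
  - apply sumC_ext; intros y. rewrite <- sumC_scal_l. apply sumC_ext; intros k. cxring.
  - unfold complete8P in Hc. setoid_rewrite Hc. rewrite sum_delta3. reflexivity.
Qed.

Definition q8 (M : Mat8) (v : Idx3 -> Cx) : R :=
  re (sumC enum3 (fun i => sumC enum3 (fun j => Cmul (Cmul (Cconj (v i)) (M i j)) (v j)))).

Lemma q8_spec (s : Mat8) e lam v :
  (forall i j, s i j = sumC enum3 (fun k => Cmul (RtoC (lam k)) (Cmul (e k i) (Cconj (e k j))))) ->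
  q8 s v = sumR enum3 (fun k => lam k * Cnorm2 (inner enum3 (e k) v)).
Proof.
  intros Hs. unfold q8. setoid_rewrite Hs.
  transitivity (re (sumC enum3 (fun k => Cmul (RtoC (lam k))
     (Cmul (Cconj (inner enum3 (e k) v)) (inner enum3 (e k) v))))).
  - f_equal. unfold inner. setoid_rewrite sumC_conj. setoid_rewrite sumC_mul.
    transitivity (sumC enum3 (fun i => sumC enum3 (fun j => sumC enum3 (fun k =>
        Cmul (RtoC (lam k)) (Cmul (Cconj (Cmul (Cconj (e k i)) (v i))) (Cmul (Cconj (e k j)) (v j))))))).
    + apply sumC_ext; intros i; apply sumC_ext; intros j.
      rewrite <- sumC_scal_l, <- sumC_scal_r. apply sumC_ext; intros k. cxring.
    + rewrite (sumC_ext enum3 _ (fun i => sumC enum3 (fun k => sumC enum3 (fun j =>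
          Cmul (RtoC (lam k)) (Cmul (Cconj (Cmul (Cconj (e k i)) (v i))) (Cmul (Cconj (e k j)) (v j))))))).
      2:{ intros i. apply sumC_swap. }
      rewrite sumC_swap. apply sumC_ext; intros k. rewrite <- sumC_scal_l. apply sumC_ext; intros i.
      rewrite sumC_scal_l. reflexivity.
  - rewrite re_sumC. apply sumR_ext; intros k. rewrite re_RtoC_mul. f_equal. cunf. ring.
Qed.

Lemma norm8 e (Hc : complete8P e) v :
  sumR enum3 (fun k => Cnorm2 (inner enum3 (e k) v)) = sumR enum3 (fun x => Cnorm2 (v x)).
Proof.
  pose proof (expand8 e Hc v v) as E.
  transitivity (re (sumC enum3 (fun k => Cmul (Cconj (inner enum3 (e k) v)) (inner enum3 (e k) v)))).
  - rewrite re_sumC. apply sumR_ext; intros; cunf; ring.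
  - rewrite E. unfold inner. rewrite re_sumC. apply sumR_ext; intros; cunf; ring.
Qed.

Definition herm2 (M : Mat2) := forall i j, M j i = Cconj (M i j).
Definition q2 (M : Mat2) (v : bool -> Cx) : R :=
  re (sumC enumB (fun i => sumC enumB (fun j => Cmul (Cmul (Cconj (v i)) (M i j)) (v j)))).
Definition psd2 (M : Mat2) := herm2 M /\ forall v, 0 <= q2 M v.

Lemma density_psd M : density2 M -> psd2 M.
Proof. intros [H1 [H2 _]]. split; auto. Qed.

Lemma q2_expand M v : herm2 M ->
  q2 M v = re (M false false) * Cnorm2 (v false) + re (M true true) * Cnorm2 (v true)
    + 2 * re (Cmul (Cmul (Cconj (v false)) (M false true)) (v true)).
Proof.
  intros H. pose proof (H false false) as H0. pose proof (H true true) as H1. pose proof (H false true) as H2.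
  apply (f_equal im) in H0. apply (f_equal im) in H1. simpl in H0, H1.
  assert (I0 : im (M false false) = 0) by lra. assert (I1 : im (M true true) = 0) by lra.
  unfold q2. rewrite !sumC_enumB. rewrite H2.
  unfold Cnorm2, Cmul, Cadd, Cconj; simpl. rewrite I0, I1. ring.
Qed.

Lemma psd_crit M : psd2 M ->
  0 <= re (M false false) /\ 0 <= re (M true true) /\
  Cnorm2 (M false true) <= re (M false false) * re (M true true).
Proof.
  intros [H P].
  set (a := re (M false false)). set (b := re (M true true)). set (z := M false true).
  assert (Q : forall v, 0 <= a * Cnorm2 (v false) + b * Cnorm2 (v true) + 2 * re (Cmul (Cmul (Cconj (v false)) z) (v true))).
  { intros v. pose proof (P v) as Pv. rewrite q2_expand in Pv by auto. exact Pv. }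
  assert (Ha : 0 <= a). { pose proof (Q (fun i => if i then Defs.C0 else Defs.C1)). cunf. lra. }
  assert (Hb : 0 <= b). { pose proof (Q (fun i => if i then Defs.C1 else Defs.C0)). cunf. lra. }
  split; auto. split; auto.
  pose proof (Q (fun i => if i then Cconj (Cmul (RtoC (-1)) z) else RtoC b)) as Q1. cunf.
  destruct (Req_dec b 0) as [Hb0|Hb0].
  - destruct (Req_dec (re z * re z + im z * im z) 0) as [Hz|Hz]. nra.
    pose proof (Q (fun i => if i then Cconj (Cmul (RtoC (- ((a + 1) / (re z * re z + im z * im z)))) z) else Defs.C1)) as Q2.
    cunf. rewrite Hb0 in Q2.
    assert (0 < re z * re z + im z * im z) by nra.
    replace (a * (1 * 1 + 0 * 0) + 0 * ((- ((a + 1) / (re z * re z + im z * im z)) * re z - 0 * im z) *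
       (- ((a + 1) / (re z * re z + im z * im z)) * re z - 0 * im z) +
       - (- ((a + 1) / (re z * re z + im z * im z)) * im z + 0 * re z) *
       - (- ((a + 1) / (re z * re z + im z * im z)) * im z + 0 * re z)) +
     2 * ((1 * re z - - 0 * im z) * (- ((a + 1) / (re z * re z + im z * im z)) * re z - 0 * im z) -
          (1 * im z + - 0 * re z) * - (- ((a + 1) / (re z * re z + im z * im z)) * im z + 0 * re z)))
      with (a - 2 * (a + 1)) in Q2 by (field; lra). lra.
  - assert (0 < b) by lra.
    assert (E : a * (b * b + 0 * 0) + b * ((-1 * re z - 0 * im z) * (-1 * re z - 0 * im z) +
       - (-1 * im z + 0 * re z) * - (-1 * im z + 0 * re z)) +
       2 * ((b * re z - - 0 * im z) * (-1 * re z - 0 * im z) - (b * im z + - 0 * re z) * - (-1 * im z + 0 * re z))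
       = b * (a * b - (re z * re z + im z * im z))) by ring.
    rewrite E in Q1. unfold Cnorm2. nra.
Qed.

Lemma psd_crit_conv M : herm2 M -> 0 <= re (M false false) -> 0 <= re (M true true) ->
  Cnorm2 (M false true) <= re (M false false) * re (M true true) -> forall v, 0 <= q2 M v.
Proof.
  intros H Ha Hb Hz v. rewrite q2_expand by auto.
  set (a := re (M false false)) in *. set (b := re (M true true)) in *. set (z := M false true) in *.
  destruct (Req_dec a 0) as [Ha0|Ha0].
  - assert (Z : re z * re z + im z * im z = 0) by (unfold Cnorm2 in Hz; nra).
    assert (re z = 0) by nra. assert (im z = 0) by nra.
    cunf. rewrite H0, H1. pose proof (Cnorm2_nonneg (v true)). unfold Cnorm2 in H2. nra.
  - assert (0 < a) by lra.
    assert (E : a * (a * Cnorm2 (v false) + b * Cnorm2 (v true) + 2 * re (Cmul (Cmul (Cconj (v false)) z) (v true)))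
      = Cnorm2 (Cadd (Cmul (RtoC a) (v false)) (Cmul z (v true))) + (a * b - Cnorm2 z) * Cnorm2 (v true)).
    { clear. destruct z, (v false), (v true). cunf. ring. }
    pose proof (Cnorm2_nonneg (Cadd (Cmul (RtoC a) (v false)) (Cmul z (v true)))).
    pose proof (Cnorm2_nonneg (v true)).
    assert (0 <= a * (a * Cnorm2 (v false) + b * Cnorm2 (v true) + 2 * re (Cmul (Cmul (Cconj (v false)) z) (v true)))) by nra.
    nra.
Qed.

Lemma herm_facts M : herm2 M -> im (M false false) = 0 /\ im (M true true) = 0 /\
  M true false = Cconj (M false true).
Proof. intros H. pose proof (H false false) as H0. pose proof (H true true) as H1.
  apply (f_equal im) in H0. apply (f_equal im) in H1. simpl in H0, H1.
  split. lra. split. lra. apply H. Qed.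

Lemma chol M : psd2 M -> exists g1 g2 : bool -> Cx, forall i j,
  M i j = Cadd (Cmul (g1 i) (Cconj (g1 j))) (Cmul (g2 i) (Cconj (g2 j))).
Proof.
  intros HP. destruct (psd_crit M HP) as [Ha [Hb Hz]]. destruct HP as [Hh _].
  destruct (herm_facts M Hh) as [I0 [I1 H10]].
  destruct (Req_dec (re (M false false)) 0) as [A0|A0].
  - assert (Z : Cnorm2 (M false true) = 0) by (pose proof (Cnorm2_nonneg (M false true)); nra).
    unfold Cnorm2 in Z. assert (Zr : re (M false true) = 0) by nra. assert (Zi : im (M false true) = 0) by nra.
    exists (fun i : bool => if i then RtoC (sqrt (re (M true true))) else Defs.C0), (fun _ : bool => Defs.C0).
    assert (SB : sqrt (re (M true true)) * sqrt (re (M true true)) = re (M true true)) by (apply sqrt_sqrt; lra).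
    intros i j; destruct i, j; apply Cx_ext; try rewrite H10; cunf; nra.
  - assert (Ap : 0 < re (M false false)) by lra.
    set (a := re (M false false)) in *. set (b := re (M true true)) in *. set (z := M false true) in *.
    assert (Sa : sqrt a * sqrt a = a) by (apply sqrt_sqrt; lra).
    assert (Sp : 0 < sqrt a) by (apply sqrt_lt_R0; lra).
    assert (Bz : 0 <= b - Cnorm2 z / a).
    { assert (Cnorm2 z / a <= b). { unfold Rdiv. apply (Rmult_le_reg_r a); auto.
        rewrite Rmult_assoc, Rinv_l, Rmult_1_r by lra. lra. } lra. }
    assert (Sb : sqrt (b - Cnorm2 z / a) * sqrt (b - Cnorm2 z / a) = b - Cnorm2 z / a) by (apply sqrt_sqrt; lra).
    exists (fun i : bool => if i then Cmul (RtoC (/ sqrt a)) (Cconj z) else RtoC (sqrt a)),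
           (fun i : bool => if i then RtoC (sqrt (b - Cnorm2 z / a)) else Defs.C0).
    intros i j; destruct i, j; apply Cx_ext; try rewrite H10.
    + cunf. rewrite Sb. change (re (M true true)) with b.
      assert (Ia : / sqrt a * / sqrt a = / a) by (rewrite <- Rinv_mult, Sa; reflexivity).
      replace ((/ sqrt a * re z - 0 * - im z) * (/ sqrt a * re z - 0 * - im z) -
        (/ sqrt a * - im z + 0 * re z) * - (/ sqrt a * - im z + 0 * re z)) with
        ((/ sqrt a * / sqrt a) * (re z * re z + im z * im z)) by ring.
      rewrite Ia. field. lra.
    + cunf. rewrite I1. ring.
    + cunf. field. lra.
    + cunf. field. lra.
    + cunf. change (M false true) with z. field. lra.
    + cunf. change (M false true) with z. field. lra.
    + cunf. change (re (M false false)) with a. lra.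
    + cunf. rewrite I0. ring.
Qed.

Lemma q2_rank2 M g1 g2 u :
  (forall i j, M i j = Cadd (Cmul (g1 i) (Cconj (g1 j))) (Cmul (g2 i) (Cconj (g2 j)))) ->
  q2 M u = Cnorm2 (inner enumB g1 u) + Cnorm2 (inner enumB g2 u).
Proof. intros H. unfold q2. setoid_rewrite H. cunf. ring. Qed.

Lemma density_trace M : density2 M -> re (M false false) + re (M true true) = 1.
Proof. intros [_ [_ T]]. apply (f_equal re) in T. cunf. lra. Qed.

Lemma q2_le_norm A z : density2 A -> q2 A z <= sumR enumB (fun i => Cnorm2 (z i)).
Proof.
  intros HA. pose proof (density_psd A HA) as HP. pose proof (density_trace A HA) as T.
  destruct (psd_crit A HP) as [Ha [Hb Hz]]. destruct HP as [Hh _].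
  destruct (herm_facts A Hh) as [I0 [I1 H10]].
  set (A' := fun i j : bool => Cadd (if Bool.eqb i j then Defs.C1 else Defs.C0) (Cmul (RtoC (-1)) (A i j))).
  assert (Hh' : herm2 A').
  { intros i j; unfold A'. rewrite (Hh i j). destruct i, j; simpl; cxring. }
  assert (Q : 0 <= q2 A' z).
  { apply psd_crit_conv; auto; unfold A'; simpl; cunf.
    - lra. - lra. - unfold Cnorm2 in Hz. nra. }
  assert (E : q2 A' z = sumR enumB (fun i => Cnorm2 (z i)) - q2 A z).
  { unfold q2, A'. cunf. ring. }
  lra.
Qed.

Definition q4 (A B : Mat2) (y : bool -> bool -> Cx) : R :=
  re (sumC enumB (fun a => sumC enumB (fun b => sumC enumB (fun a' => sumC enumB (fun b' =>
    Cmul (Cmul (Cconj (y a b)) (Cmul (A a a') (B b b'))) (y a' b')))))).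

Lemma sumC_mul3 {I J} (l1 : list I) (l2 : list J) f K g :
  Cmul (Cmul (sumC l1 f) K) (sumC l2 g) = sumC l1 (fun i => sumC l2 (fun j => Cmul (Cmul (f i) K) (g j))).
Proof. rewrite <- sumC_scal_r. rewrite <- sumC_scal_r. apply sumC_ext; intros i.
  rewrite <- sumC_scal_l. apply sumC_ext; intros j. reflexivity. Qed.

Lemma q8_rank1C A B g v :
  q8 (prod_state A B (fun i j => Cmul (g i) (Cconj (g j)))) v =
  q4 A B (fun a b => inner enumB g (fun c => v (a, b, c))).
Proof.
  unfold q8, q4, inner. f_equal.
  rewrite sumC_enum3. setoid_rewrite sumC_enum3.
  setoid_rewrite sumC_conj. setoid_rewrite sumC_mul3.
  apply sumC_ext; intros a. apply sumC_ext; intros b.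
  rewrite sumC_swap. apply sumC_ext; intros a'. rewrite sumC_swap. apply sumC_ext; intros b'.
  apply sumC_ext; intros c. apply sumC_ext; intros c'. unfold prod_state. cxring.
Qed.

Lemma q8_ext M1 M2 v : (forall x y, M1 x y = M2 x y) -> q8 M1 v = q8 M2 v.
Proof. intros H. unfold q8. setoid_rewrite H. reflexivity. Qed.
Lemma q8_add M1 M2 v : q8 (fun x y => Cadd (M1 x y) (M2 x y)) v = q8 M1 v + q8 M2 v.
Proof. unfold q8. rewrite <- re_Cadd, <- sumC_add. f_equal. apply sumC_ext; intros i.
  rewrite <- sumC_add. apply sumC_ext; intros j. cxring. Qed.
Lemma q4_ext A B1 B2 y : (forall x y, B1 x y = B2 x y) -> q4 A B1 y = q4 A B2 y.
Proof. intros H. unfold q4. setoid_rewrite H. reflexivity. Qed.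
Lemma q4_add A B1 B2 y : q4 A (fun x y => Cadd (B1 x y) (B2 x y)) y = q4 A B1 y + q4 A B2 y.
Proof. unfold q4. rewrite <- re_Cadd, <- sumC_add. f_equal. apply sumC_ext; intros a.
  rewrite <- sumC_add. apply sumC_ext; intros b. rewrite <- sumC_add. apply sumC_ext; intros a'.
  rewrite <- sumC_add. apply sumC_ext; intros b'. cxring. Qed.

Lemma q4_rank1B A g y :
  q4 A (fun i j => Cmul (g i) (Cconj (g j))) y = q2 A (fun a => inner enumB g (y a)).
Proof.
  unfold q4, q2, inner. f_equal.
  setoid_rewrite sumC_conj. setoid_rewrite sumC_mul3.
  apply sumC_ext; intros a. rewrite sumC_swap. apply sumC_ext; intros a'.
  apply sumC_ext; intros b. apply sumC_ext; intros b'. cxring.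
Qed.

Lemma q4_bounds A B y : density2 A -> density2 B ->
  0 <= q4 A B y <= sumR enumB (fun a => sumR enumB (fun b => Cnorm2 (y a b))).
Proof.
  intros HA HB. destruct (chol B (density_psd B HB)) as [g1 [g2 Hg]].
  rewrite (q4_ext A B (fun x y => Cadd (Cmul (g1 x) (Cconj (g1 y))) (Cmul (g2 x) (Cconj (g2 y))))) by exact Hg.
  rewrite q4_add, !q4_rank1B.
  pose proof (density_psd A HA) as [_ PA].
  pose proof (PA (fun a => inner enumB g1 (y a))). pose proof (PA (fun a => inner enumB g2 (y a))).
  pose proof (q2_le_norm A (fun a => inner enumB g1 (y a)) HA).
  pose proof (q2_le_norm A (fun a => inner enumB g2 (y a)) HA).
  assert (E : sumR enumB (fun i => Cnorm2 (inner enumB g1 (y i))) + sumR enumB (fun i => Cnorm2 (inner enumB g2 (y i)))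
     = sumR enumB (fun a => q2 B (y a))).
  { rewrite <- sumR_add. apply sumR_ext; intros a. symmetry. apply q2_rank2. exact Hg. }
  assert (U : sumR enumB (fun a => q2 B (y a)) <= sumR enumB (fun a => sumR enumB (fun b => Cnorm2 (y a b)))).
  { apply sumR_le; intros a. apply q2_le_norm; exact HB. }
  split; lra.
Qed.

Lemma q8_bounds A B C v : density2 A -> density2 B -> density2 C ->
  0 <= q8 (prod_state A B C) v <=
  sumR enumB (fun a => sumR enumB (fun b => q2 C (fun c => v (a, b, c)))).
Proof.
  intros HA HB HC. destruct (chol C (density_psd C HC)) as [g1 [g2 Hg]].
  rewrite (q8_ext _ (fun x y => Cadd (prod_state A B (fun i j => Cmul (g1 i) (Cconj (g1 j))) x y)
     (prod_state A B (fun i j => Cmul (g2 i) (Cconj (g2 j))) x y))).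
  2:{ intros [[a b] c] [[a' b'] c']. unfold prod_state. rewrite Hg. cxring. }
  rewrite q8_add, !q8_rank1C.
  pose proof (q4_bounds A B (fun a b => inner enumB g1 (fun c => v (a, b, c))) HA HB).
  pose proof (q4_bounds A B (fun a b => inner enumB g2 (fun c => v (a, b, c))) HA HB).
  assert (E : sumR enumB (fun a => sumR enumB (fun b => Cnorm2 (inner enumB g1 (fun c => v (a, b, c))))) +
              sumR enumB (fun a => sumR enumB (fun b => Cnorm2 (inner enumB g2 (fun c => v (a, b, c))))) =
              sumR enumB (fun a => sumR enumB (fun b => q2 C (fun c => v (a, b, c))))).
  { rewrite <- sumR_add. apply sumR_ext; intros a. rewrite <- sumR_add. apply sumR_ext; intros b.
    symmetry; apply q2_rank2; exact Hg. }
  simpl in *. lra.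
Qed.

Definition termF (t : R * (Mat2 * Mat2 * Mat2)) (x y : Idx3) : Cx :=
  match t with (w, (sA, sB, sC)) => Cmul (RtoC w) (prod_state sA sB sC x y) end.
Definition termC (t : R * (Mat2 * Mat2 * Mat2)) (c c' : bool) : Cx :=
  match t with (w, (sA, sB, sC)) => Cmul (RtoC w) (sC c c') end.
Definition sigC (L : list (R * (Mat2 * Mat2 * Mat2))) : Mat2 :=
  fun c c' => sumC L (fun t => termC t c c').
Definition condT (t : R * (Mat2 * Mat2 * Mat2)) : Prop :=
  match t with (w, (sA, sB, sC)) => 0 <= w /\ density2 sA /\ density2 sB /\ density2 sC end.

Lemma q8_scal w M v : q8 (fun x y => Cmul (RtoC w) (M x y)) v = w * q8 M v.
Proof. unfold q8. rewrite <- re_RtoC_mul, <- sumC_scal_l. f_equal. apply sumC_ext; intros i.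
  rewrite <- sumC_scal_l. apply sumC_ext; intros j. cxring. Qed.
Lemma q8_zero v : q8 (fun _ _ => Defs.C0) v = 0.
Proof. unfold q8. rewrite (sumC_ext _ _ (fun _ => Defs.C0)). rewrite sumC_zero; reflexivity.
  intros i. rewrite (sumC_ext _ _ (fun _ => Defs.C0)). apply sumC_zero. intros j; cxring. Qed.
Lemma q2_ext M1 M2 v : (forall x y, M1 x y = M2 x y) -> q2 M1 v = q2 M2 v.
Proof. intros H. unfold q2. setoid_rewrite H. reflexivity. Qed.
Lemma q2_add M1 M2 v : q2 (fun x y => Cadd (M1 x y) (M2 x y)) v = q2 M1 v + q2 M2 v.
Proof. unfold q2. cunf. ring. Qed.
Lemma q2_scal w M v : q2 (fun x y => Cmul (RtoC w) (M x y)) v = w * q2 M v.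
Proof. unfold q2. cunf. ring. Qed.
Lemma q2_zero v : q2 (fun _ _ => Defs.C0) v = 0.
Proof. unfold q2. cunf. ring. Qed.

Lemma sep_bounds L v : Forall condT L ->
  0 <= q8 (fun x y => sumC L (fun t => termF t x y)) v <=
  sumR enumB (fun a => sumR enumB (fun b => q2 (sigC L) (fun c => v (a, b, c)))).
Proof.
  induction L as [|t L IH]; intros HF.
  - simpl. rewrite q8_zero. unfold sigC. simpl. rewrite !q2_zero. simpl. lra.
  - inversion HF as [|t' L' Ht HL]; subst. specialize (IH HL).
    simpl sumC. rewrite q8_add.
    destruct t as [w [[sA sB] sC]]. destruct Ht as [Hw [HA [HB HC]]].
    assert (E : forall u, q2 (sigC ((w, (sA, sB, sC)) :: L)) u = w * q2 sC u + q2 (sigC L) u).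
    { intros u. unfold sigC, q2. cunf. ring. }
    setoid_rewrite E. rewrite (sumR_ext _ _ (fun a => w * sumR enumB (fun b => q2 sC (fun c => v (a, b, c))) +
        sumR enumB (fun b => q2 (sigC L) (fun c => v (a, b, c))))).
    2:{ intros a. rewrite sumR_add, sumR_scal. reflexivity. }
    rewrite sumR_add, sumR_scal.
    replace (q8 (termF (w, (sA, sB, sC))) v) with (w * q8 (prod_state sA sB sC) v)
      by (rewrite <- q8_scal; reflexivity).
    pose proof (q8_bounds sA sB sC v HA HB HC) as [B1 B2].
    pose proof (Rmult_le_pos _ _ Hw B1). pose proof (Rmult_le_compat_l _ _ _ Hw B2).
    destruct IH. split; lra.
Qed.

Lemma sigC_herm L : Forall condT L -> herm2 (sigC L).
Proof.
  induction L as [|t L IH]; intros HF i j.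
  - unfold sigC; simpl; cxring.
  - inversion HF as [|t' L' Ht HL]; subst. specialize (IH HL i j). unfold sigC in *. simpl.
    rewrite IH. destruct t as [w [[sA sB] sC]]. destruct Ht as [Hw [HA [HB HC]]].
    destruct HA as [_ _]. destruct HC as [HCh _]. simpl. rewrite (HCh i j).
    generalize (sumC L (fun t => termC t i j)), (sC i j). intros. cxring.
Qed.

Lemma sigC_psd L : Forall condT L -> forall u, 0 <= q2 (sigC L) u.
Proof.
  induction L as [|t L IH]; intros HF u.
  - unfold sigC; simpl. rewrite q2_zero. lra.
  - inversion HF as [|t' L' Ht HL]; subst. specialize (IH HL u). unfold sigC in *. simpl.
    rewrite q2_add. destruct t as [w [[sA sB] sC]]. destruct Ht as [Hw [HA [HB HC]]].
    replace (q2 (termC (w, (sA, sB, sC))) u) with (w * q2 sC u)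
      by (rewrite <- q2_scal; reflexivity).
    destruct HC as [_ [HCp _]].
    specialize (HCp u). fold (q2 sC u) in HCp. pose proof (Rmult_le_pos _ _ Hw HCp). lra.
Qed.

Lemma sigC_trace L : Forall condT L ->
  re (sigC L false false) + re (sigC L true true) = sumR L (fun t => fst t).
Proof.
  induction L as [|t L IH]; intros HF.
  - unfold sigC; simpl; lra.
  - inversion HF as [|t' L' Ht HL]; subst. specialize (IH HL). unfold sigC in *. simpl.
    destruct t as [w [[sA sB] sC]]. destruct Ht as [Hw [HA [HB HC]]].
    pose proof (density_trace sC HC). simpl. rewrite <- IH.
    assert (w * re (sC false false) + w * re (sC true true) = w) by (rewrite <- Rmult_plus_distr_l, H; ring).
    ring_simplify. ring_simplify in H0. lra.
Qed.

Definition spec2 (M : Mat2) (c : bool -> bool -> Cx) (nu : bool -> R) :=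
  qubit_ONB c /\ (forall k, 0 <= nu k) /\ nu false + nu true = 1 /\
  forall i j, M i j = sumC enumB (fun k => Cmul (RtoC (nu k)) (Cmul (c k i) (Cconj (c k j)))).

Lemma scale_prod r a b : Cmul (Cmul (RtoC r) a) (Cconj (Cmul (RtoC r) b)) = Cmul (RtoC (r * r)) (Cmul a (Cconj b)).
Proof. cxring. Qed.

Lemma diag2 M : psd2 M -> re (M false false) + re (M true true) = 1 ->
  exists c nu, spec2 M c nu.
Proof.
  intros HP T. destruct (psd_crit M HP) as [Ha [Hb Hz]]. destruct HP as [Hh _].
  destruct (herm_facts M Hh) as [I0 [I1 H10]].
  destruct (Req_dec (Cnorm2 (M false true)) 0) as [Z|Z].
  - unfold Cnorm2 in Z. assert (Zr : re (M false true) = 0) by nra. assert (Zi : im (M false true) = 0) by nra.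
    exists (fun k i : bool => if Bool.eqb k i then Defs.C1 else Defs.C0).
    exists (fun k : bool => if k then re (M true true) else re (M false false)).
    split; [| split; [| split]].
    + intros i j; destruct i, j; cxring.
    + intros k; destruct k; auto.
    + exact T.
    + intros i j; destruct i, j; apply Cx_ext; try rewrite H10; cunf; lra.
  - set (a := re (M false false)) in *. set (b := re (M true true)) in *. set (z := M false true) in *.
    assert (Kp : 0 < Cnorm2 z) by (pose proof (Cnorm2_nonneg z); lra).
    set (K := Cnorm2 z) in *.
    set (D := sqrt ((a - b) * (a - b) + 4 * K)).
    assert (S0 : 0 <= (a - b) * (a - b)) by (apply Rle_0_sqr).
    assert (DD : D * D = (a - b) * (a - b) + 4 * K) by (apply sqrt_sqrt; lra).
    assert (Dp : 0 < D) by (apply sqrt_lt_R0; lra).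
    set (p := (b - a + D) / 2). set (q := (b - a - D) / 2).
    assert (pq : p * q = - K) by (unfold p, q; nra).
    assert (Pp : 0 < p) by (unfold p; nra).
    assert (Qn : q < 0) by (unfold q; nra).
    set (Np := sqrt (p * D)). set (Nm := sqrt (- q * D)).
    assert (NpN : Np * Np = p * D) by (apply sqrt_sqrt; nra).
    assert (NmN : Nm * Nm = - q * D) by (apply sqrt_sqrt; nra).
    assert (Npp : 0 < Np) by (apply sqrt_lt_R0; nra).
    assert (Nmp : 0 < Nm) by (apply sqrt_lt_R0; nra).
    set (u := fun k i : bool => if i then RtoC (if k then q else p) else z).
    exists (fun k i : bool => Cmul (RtoC (if k then / Nm else / Np)) (u k i)).
    exists (fun k : bool => if k then a + q else a + p).
    split; [| split; [| split]].
    + intros k l. unfold inner.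
      rewrite (sumC_ext _ _ (fun x => Cmul (RtoC ((if k then / Nm else / Np) * (if l then / Nm else / Np)))
         (Cmul (Cconj (u k x)) (u l x)))).
      2:{ intros x. cxring. }
      rewrite sumC_scal_l. unfold u.
      destruct k, l; simpl; apply Cx_ext; cunf.
      * rewrite <- Rinv_mult, NmN. replace (re z * re z - - im z * im z) with K by (unfold K, Cnorm2; ring).
        replace K with (- (p * q)) by lra. unfold p, q. field. split; nra.
      * ring.
      * replace (re z * re z - - im z * im z) with K by (unfold K, Cnorm2; ring).
        replace K with (- (p * q)) by lra. ring.
      * ring.
      * replace (re z * re z - - im z * im z) with K by (unfold K, Cnorm2; ring).
        replace K with (- (p * q)) by lra. ring.
      * ring.
      * rewrite <- Rinv_mult, NpN. replace (re z * re z - - im z * im z) with K by (unfold K, Cnorm2; ring).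
        replace K with (- (p * q)) by lra. unfold p, q. field. split; nra.
      * ring.
    + intros k; destruct k.
      * assert (D <= a + b) by nra. unfold q; lra.
      * unfold p; lra.
    + unfold p, q; lra.
    + intros i j. rewrite sumC_enumB. rewrite !scale_prod.
      rewrite <- !Rinv_mult. rewrite NpN, NmN.
      destruct i, j; apply Cx_ext; unfold u; try rewrite H10; cunf.
      * change (re (M true true)) with b. unfold p, q. field. split; nra.
      * rewrite I1. ring.
      * unfold p, q. field. split; nra.
      * unfold p, q. field. split; nra.
      * change (M false true) with z. unfold p, q. field. split; nra.
      * change (M false true) with z. unfold p, q. field. split; nra.
      * change (re (M false false)) with a.
        replace (re z * re z - im z * - im z) with K by (unfold K, Cnorm2; ring).
        replace K with (- (p * q)) by lra. unfold p, q. field. split; nra.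
      * rewrite I0. ring.
Qed.

Lemma onb_inner c (Hc : qubit_ONB c) k l : inner enumB (c k) (c l) = if Bool.eqb k l then Defs.C1 else Defs.C0.
Proof. apply Hc. Qed.

Definition vb (c : bool -> bool -> Cx) (beta : bool -> Cx) : bool -> Cx :=
  fun i => sumC enumB (fun j => Cmul (beta j) (c j i)).

Lemma vb_inner c beta u : inner enumB (vb c beta) u =
  sumC enumB (fun j => Cmul (Cconj (beta j)) (inner enumB (c j) u)).
Proof. unfold vb. cxring. Qed.

Lemma vb_norm c (Hc : qubit_ONB c) beta :
  sumR enumB (fun i => Cnorm2 (vb c beta i)) = sumR enumB (fun j => Cnorm2 (beta j)).
Proof.
  transitivity (re (sumC enumB (fun j => sumC enumB (fun l =>
     Cmul (Cmul (Cconj (beta j)) (beta l)) (inner enumB (c j) (c l)))))).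
  - unfold vb. cunf. ring.
  - setoid_rewrite (onb_inner c Hc). cunf. ring.
Qed.

Lemma vb_q2 M c nu (Hs : spec2 M c nu) beta :
  q2 M (vb c beta) = sumR enumB (fun j => nu j * Cnorm2 (beta j)).
Proof.
  destruct Hs as [Hc [_ [_ HM]]].
  transitivity (sumR enumB (fun k => nu k * Cnorm2 (inner enumB (c k) (vb c beta)))).
  - unfold q2. setoid_rewrite HM. unfold vb. cunf. ring.
  - assert (E : forall k, inner enumB (c k) (vb c beta) = beta k).
    { intros k. transitivity (sumC enumB (fun j => Cmul (beta j) (inner enumB (c k) (c j)))).
      + unfold vb. cxring.
      + setoid_rewrite (onb_inner c Hc). destruct k; cxring. }
    setoid_rewrite E. reflexivity.
Qed.

Lemma var_c M c nu (Hs : spec2 M c nu) u t : 0 < t ->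
  let beta := fun j => Cmul (RtoC (/ (nu j + t))) (inner enumB (c j) u) in
  2 * re (inner enumB (vb c beta) u) - t * sumR enumB (fun i => Cnorm2 (vb c beta i)) - q2 M (vb c beta)
  = sumR enumB (fun j => Cnorm2 (inner enumB (c j) u) / (nu j + t)).
Proof.
  intros Ht beta. pose proof Hs as Hs'. destruct Hs' as [Hc [Hn _]].
  rewrite (vb_q2 M c nu Hs). rewrite (vb_norm c Hc). rewrite vb_inner.
  unfold beta. rewrite !sumR_enumB. rewrite sumC_enumB.
  pose proof (Hn false). pose proof (Hn true).
  generalize (inner enumB (c false) u) (inner enumB (c true) u). intros w0 w1.
  cunf. field. lra.
Qed.

Lemma var_term z w a : 0 < a -> 2 * re (Cmul (Cconj z) w) - a * Cnorm2 z <= Cnorm2 w / a.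
Proof.
  intros Ha.
  assert (E : Cnorm2 w / a - (2 * re (Cmul (Cconj z) w) - a * Cnorm2 z) =
     Cnorm2 (Cadd w (Cmul (RtoC (- a)) z)) / a) by (cunf; field; lra).
  assert (0 <= Cnorm2 (Cadd w (Cmul (RtoC (- a)) z)) / a).
  { unfold Rdiv. apply Rmult_le_pos; [apply Cnorm2_nonneg | left; apply Rinv_0_lt_compat; lra]. }
  lra.
Qed.

Lemma sum_combine {I} (l : list I) (X Y lam : I -> R) t :
  2 * sumR l X - t * sumR l Y - sumR l (fun k => lam k * Y k) = sumR l (fun k => 2 * X k - (lam k + t) * Y k).
Proof. induction l; simpl. ring. rewrite <- IHl. ring. Qed.

Lemma var_e s e lam (Hc : complete8P e)
  (Hs : forall i j, s i j = sumC enum3 (fun k => Cmul (RtoC (lam k)) (Cmul (e k i) (Cconj (e k j)))))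
  (Hl : forall k, 0 <= lam k) psi v t : 0 < t ->
  2 * re (inner enum3 v psi) - t * sumR enum3 (fun x => Cnorm2 (v x)) - q8 s v <=
  sumR enum3 (fun k => Cnorm2 (inner enum3 (e k) psi) / (lam k + t)).
Proof.
  intros Ht. rewrite (q8_spec s e lam v Hs). rewrite <- (norm8 e Hc v). rewrite <- (expand8 e Hc v psi).
  rewrite re_sumC.
  transitivity (sumR enum3 (fun k => 2 * re (Cmul (Cconj (inner enum3 (e k) v)) (inner enum3 (e k) psi))
     - (lam k + t) * Cnorm2 (inner enum3 (e k) v))).
  { right. apply (sum_combine enum3 (fun k => re (Cmul (Cconj (inner enum3 (e k) v)) (inner enum3 (e k) psi)))
      (fun k => Cnorm2 (inner enum3 (e k) v)) lam t). }
  apply sumR_le. intros k.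
  pose proof (var_term (inner enum3 (e k) v) (inner enum3 (e k) psi) (lam k + t)).
  pose proof (Hl k). specialize (H ltac:(lra)). unfold Cnorm2 in *. nra.
Qed.

Module CQ2.
Import Coquelicot.Coquelicot.

Lemma is_derive_sumR {I} (l : list I) (F dF : I -> R -> R) t :
  (forall i, In i l -> is_derive (F i) t (dF i t)) ->
  is_derive (fun x => sumR l (fun i => F i x)) t (sumR l (fun i => dF i t)).
Proof.
  induction l as [|a l IH]; intros H; simpl.
  - apply (is_derive_const 0).
  - apply (is_derive_plus (F a) (fun x => sumR l (fun i => F i x))).
    + apply H; left; auto.
    + apply IH. intros i Hi; apply H; right; auto.
Qed.

Lemma is_derive_oln o lam t : 0 < lam + t ->
  is_derive (fun x => o * ln (lam + x)) t (o / (lam + t)).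
Proof. intros H. auto_derive. lra. field. lra. Qed.

Lemma phi_arg {I J} (l1 : list I) (l2 : list J) (o lam : I -> R) (p nu : J -> R) :
  (forall k, 0 <= o k) -> (forall k, 0 <= lam k) -> (forall j, 0 <= p j) -> (forall j, 0 <= nu j) ->
  sumR l1 o = 1 -> sumR l2 p = 1 ->
  (forall t, 0 < t -> sumR l2 (fun j => p j / (nu j + t)) <= sumR l1 (fun k => o k / (lam k + t))) ->
  forall t0, 0 < t0 ->
  sumR l1 (fun k => o k * ln (lam k + t0)) <= sumR l2 (fun j => p j * ln (nu j + t0)).
Proof.
  intros Ho Hl Hp Hn So Sp Hfg t0 Ht0.
  set (Phi := fun x => sumR l1 (fun k => o k * ln (lam k + x)) - sumR l2 (fun j => p j * ln (nu j + x))).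
  assert (Mono : forall T, t0 <= T -> Phi t0 <= Phi T).
  { intros T HT. apply (CQ.mono_deriv Phi (fun x => sumR l1 (fun k => o k / (lam k + x)) - sumR l2 (fun j => p j / (nu j + x)))).
    - exact HT.
    - intros x Hx. unfold Phi. apply (is_derive_minus (fun x => sumR l1 (fun k => o k * ln (lam k + x)))
         (fun x => sumR l2 (fun j => p j * ln (nu j + x)))).
      + apply (is_derive_sumR l1 (fun k x => o k * ln (lam k + x)) (fun k x => o k / (lam k + x))).
        intros i _. apply is_derive_oln. pose proof (Hl i); lra.
      + apply (is_derive_sumR l2 (fun j x => p j * ln (nu j + x)) (fun j x => p j / (nu j + x))).
        intros i _. apply is_derive_oln. pose proof (Hn i); lra.
    - intros x Hx. pose proof (Hfg x ltac:(lra)). lra. }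
  set (M := sumR l1 (fun k => o k * lam k)).
  assert (M0 : 0 <= M) by (apply sumR_nonneg; intros k; apply Rmult_le_pos; auto).
  assert (Bound : forall T, 0 < T -> Phi T <= M / T).
  { intros T HT. unfold Phi.
    assert (E1 : sumR l1 (fun k => o k * ln (lam k + T)) = sumR l1 (fun k => o k * (ln (lam k + T) - ln T)) + ln T).
    { transitivity (sumR l1 (fun k => o k * (ln (lam k + T) - ln T) + ln T * o k)).
      - apply sumR_ext; intros; ring.
      - rewrite sumR_add, sumR_scal, So. ring. }
    assert (E2 : sumR l2 (fun j => p j * ln (nu j + T)) = sumR l2 (fun j => p j * (ln (nu j + T) - ln T)) + ln T).
    { transitivity (sumR l2 (fun j => p j * (ln (nu j + T) - ln T) + ln T * p j)).
      - apply sumR_ext; intros; ring.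
      - rewrite sumR_add, sumR_scal, Sp. ring. }
    rewrite E1, E2.
    assert (U : sumR l1 (fun k => o k * (ln (lam k + T) - ln T)) <= M / T).
    { unfold M, Rdiv. rewrite Rmult_comm, <- sumR_scal. apply sumR_le. intros k.
      assert (ln (lam k + T) - ln T <= lam k / T).
      { pose proof (Hl k). pose proof (ln_le_x1 ((lam k + T) / T)).
        assert (Eq : ln ((lam k + T) / T) = ln (lam k + T) - ln T).
        { unfold Rdiv. rewrite ln_mult, ln_Rinv by (try apply Rinv_0_lt_compat; lra). ring. }
        replace ((lam k + T) / T - 1) with (lam k / T) in H0 by (field; lra).
        rewrite <- Eq. apply H0. apply Rdiv_lt_0_compat; lra. }
      pose proof (Ho k). unfold Rdiv in H. nra. }
    assert (V : 0 <= sumR l2 (fun j => p j * (ln (nu j + T) - ln T))).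
    { apply sumR_nonneg. intros j. apply Rmult_le_pos. auto.
      pose proof (Hn j). pose proof (ln_le_mono T (nu j + T) HT ltac:(lra)). lra. }
    lra. }
  assert (Phi t0 <= 0).
  { destruct (Rle_dec (Phi t0) 0) as [|Hgt]; auto. exfalso. apply Rnot_le_lt in Hgt.
    set (T := t0 + M / Phi t0 + 1).
    assert (HT : t0 <= T). { unfold T. assert (0 <= M / Phi t0) by (apply Rdiv_le_0_compat; lra). lra. }
    pose proof (Mono T HT). pose proof (Bound T ltac:(lra)).
    assert (M / T < Phi t0).
    { apply (Rmult_lt_reg_r T). lra. unfold Rdiv. rewrite Rmult_assoc, Rinv_l, Rmult_1_r by lra.
      unfold T. assert (M = Phi t0 * (M / Phi t0)) by (field; lra). nra. }
    lra. }
  unfold Phi in H. lra.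
Qed.
End CQ2.

Lemma gibbs_term p nu t0 : 0 <= p -> 0 <= nu -> 0 < t0 ->
  p * ln (nu + t0) <= - hl p + (nu + t0 - p).
Proof.
  intros Hp Hn Ht. destruct (Req_dec p 0). subst. rewrite hl_0. lra.
  rewrite hl_pos by auto.
  pose proof (ln_le_x1 ((nu + t0) / p) ltac:(apply Rdiv_lt_0_compat; lra)).
  assert (Eq : ln ((nu + t0) / p) = ln (nu + t0) - ln p).
  { unfold Rdiv. rewrite ln_mult, ln_Rinv by (try apply Rinv_0_lt_compat; lra). ring. }
  rewrite Eq in H0.
  assert (p * (ln (nu + t0) - ln p) <= p * ((nu + t0) / p - 1)) by (apply Rmult_le_compat_l; lra).
  replace (p * ((nu + t0) / p - 1)) with (nu + t0 - p) in H1 by (field; lra). lra.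
Qed.

Lemma gibbs (p nu : bool -> R) t0 : (forall j, 0 <= p j) -> (forall j, 0 <= nu j) ->
  p false + p true = 1 -> nu false + nu true = 1 -> 0 < t0 ->
  sumR enumB (fun j => p j * ln (nu j + t0)) <= - sumR enumB (fun j => hl (p j)) + 2 * t0.
Proof.
  intros Hp Hn Sp Sn Ht. rewrite !sumR_enumB.
  pose proof (gibbs_term (p false) (nu false) t0 (Hp false) (Hn false) Ht).
  pose proof (gibbs_term (p true) (nu true) t0 (Hp true) (Hn true) Ht). lra.
Qed.

Lemma sum_ab_norm X Y : sumR enumB (fun a => sumR enumB (fun b =>
   Cnorm2 (Cadd (Cmul X (RtoC (cp a * cp b))) (Cmul Y (RtoC (cm a * cm b)))))) = Cnorm2 X + Cnorm2 Y.
Proof.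
  transitivity ((rp * rp + rm * rm) * (rp * rp + rm * rm) * (Cnorm2 X + Cnorm2 Y)).
  - unfold cp, cm. cunf. ring.
  - rewrite rp2rm2. ring.
Qed.

Lemma pform (cj : bool -> Cx) : sumR enumB (fun a => sumR enumB (fun b =>
  Cnorm2 (inner enumB cj (fun x => Omega a b x)))) = mp * ov cj cpv + mm * ov cj cmv.
Proof.
  rewrite (sumR_ext _ _ (fun a => sumR enumB (fun b =>
     Cnorm2 (Cadd (Cmul (Cmul (RtoC rp) (inner enumB cj cpv)) (RtoC (cp a * cp b)))
                  (Cmul (Cmul (RtoC rm) (inner enumB cj cmv)) (RtoC (cm a * cm b))))))).
  - rewrite sum_ab_norm. rewrite !Cnorm2_mul, !Cnorm2_RtoC, rp_sq, rm_sq. unfold ov; ring.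
  - intros a; apply sumR_ext; intros b. f_equal. unfold inner.
    rewrite (sumC_ext _ _ (fun x => Cmul (Cconj (cj x)) (RtoC (rp * cp a * cp b * cp x + rm * cm a * cm b * cm x)))).
    2:{ intros x; rewrite Omega_decomp; reflexivity. }
    unfold cpv, cmv. generalize (cp a) (cp b) (cm a) (cm b). intros. unfold cp, cm. cxring.
Qed.

Lemma major c (Hc : qubit_ONB c) :
  hl mp + hl mm <= sumR enumB (fun j => hl (mp * ov (c j) cpv + mm * ov (c j) cmv)).
Proof.
  pose proof (parseval_ov c Hc cpv) as P1. pose proof (parseval_ov c Hc cmv) as P2.
  rewrite cpv_norm in P1. rewrite cmv_norm in P2.
  eapply Rle_trans; [| apply sumR_le; intros j; apply hl_conc; [exact mp_pos | exact mm_pos | apply ov_nonneg | apply ov_nonneg |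
     pose proof (ov_cpm c Hc j); lra]].
  rewrite !sumR_enumB. rewrite !sumR_enumB in P1, P2.
  replace (ov (c false) cpv * hl mp + ov (c false) cmv * hl mm + (ov (c true) cpv * hl mp + ov (c true) cmv * hl mm))
    with (hl mp * (ov (c false) cpv + ov (c true) cpv) + hl mm * (ov (c false) cmv + ov (c true) cmv)) by ring.
  rewrite P1, P2. lra.
Qed.

Lemma psum c (Hc : qubit_ONB c) :
  sumR enumB (fun j => mp * ov (c j) cpv + mm * ov (c j) cmv) = 1.
Proof.
  pose proof (parseval_ov c Hc cpv) as P1. pose proof (parseval_ov c Hc cmv) as P2.
  rewrite cpv_norm in P1. rewrite cmv_norm in P2.
  rewrite sumR_add, !sumR_scal, P1, P2. rewrite Rmult_1_r, Rmult_1_r. apply mp_mm.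
Qed.

Lemma omega_norm : sumR enum3 (fun x => Cnorm2 (vec3 Omega x)) = 1.
Proof. pose proof sv_sq. simpl. unfold Cnorm2, RtoC, Defs.C0; simpl. fold sv. lra. Qed.

Lemma sum_delta3R (f : Idx3 -> R) k :
  sumR enum3 (fun l => f l * (if eqb3 l k then 1 else 0)) = f k.
Proof. destruct k as [[a b] c]; destruct a, b, c; simpl; ring. Qed.

Lemma lam_eq s e lam : ONB3 e ->
  (forall i j, s i j = sumC enum3 (fun k => Cmul (RtoC (lam k)) (Cmul (e k i) (Cconj (e k j))))) ->
  forall k, q8 s (e k) = lam k.
Proof.
  intros He Hs k. rewrite (q8_spec s e lam (e k) Hs).
  rewrite <- (sum_delta3R lam k). apply sumR_ext; intros l. f_equal.
  rewrite (He l k). destruct (eqb3 l k); cunf; ring.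
Qed.

Lemma split_ab (v : Idx3 -> Cx) (M : Mat2) t :
  2 * re (inner enum3 v (vec3 Omega)) - t * sumR enum3 (fun x => Cnorm2 (v x))
    - sumR enumB (fun a => sumR enumB (fun b => q2 M (fun c => v (a, b, c)))) =
  sumR enumB (fun a => sumR enumB (fun b =>
    2 * re (inner enumB (fun c => v (a, b, c)) (fun c => Omega a b c))
    - t * sumR enumB (fun c => Cnorm2 (v (a, b, c))) - q2 M (fun c => v (a, b, c)))).
Proof.
  unfold inner. rewrite sumC_enum3. rewrite sumR_enum3.
  rewrite !sumR_enumB, !sumC_enumB. rewrite !re_Cadd. cbv beta iota delta [vec3]. ring.
Qed.

Lemma ER_lower s e lam : fully_separable s -> spectral8 s e lam -> finite_relent Omega e lam ->
  Hstar <= relent_val Omega e lam.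
Proof.
  intros [L [HF [HW HL]]] [He Hs] Hfin.
  pose proof (complete8 e He) as Hc. change (complete8P e) in Hc.
  assert (Red : forall v, 0 <= q8 s v <= sumR enumB (fun a => sumR enumB (fun b => q2 (sigC L) (fun c => v (a, b, c))))).
  { intros v. rewrite (q8_ext s (fun x y => sumC L (fun t => termF t x y))) by exact HL.
    apply sep_bounds; exact HF. }
  assert (Hl : forall k, 0 <= lam k).
  { intros k. rewrite <- (lam_eq s e lam He Hs k). apply Red. }
  assert (Tr : re (sigC L false false) + re (sigC L true true) = 1).
  { rewrite sigC_trace by exact HF. exact HW. }
  destruct (diag2 (sigC L) (conj (sigC_herm L HF) (sigC_psd L HF)) Tr) as [c [nu Hsp]].
  pose proof Hsp as [Hc2 [Hnu [Snu _]]].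
  set (p := fun j => mp * ov (c j) cpv + mm * ov (c j) cmv).
  set (o := fun k => Cnorm2 (inner enum3 (e k) (vec3 Omega))).
  assert (Var : forall t, 0 < t -> sumR enumB (fun j => p j / (nu j + t)) <= sumR enum3 (fun k => o k / (lam k + t))).
  { intros t Ht.
    set (beta := fun a b j => Cmul (RtoC (/ (nu j + t))) (inner enumB (c j) (fun x => Omega a b x))).
    set (v := fun x : Idx3 => match x with (a, b, cc) => vb c (beta a b) cc end).
    pose proof (var_e s e lam Hc Hs Hl (vec3 Omega) v t Ht) as VE.
    pose proof (Red v) as [_ R2].
    assert (C1 : 2 * re (inner enum3 v (vec3 Omega)) - t * sumR enum3 (fun x => Cnorm2 (v x))
       - sumR enumB (fun a => sumR enumB (fun b => q2 (sigC L) (fun cc => v (a, b, cc))))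
       <= sumR enum3 (fun k => o k / (lam k + t))) by (unfold o; lra).
    rewrite (split_ab v (sigC L) t) in C1.
    assert (VC : forall a b, 2 * re (inner enumB (fun cc => v (a, b, cc)) (fun cc => Omega a b cc))
      - t * sumR enumB (fun cc => Cnorm2 (v (a, b, cc))) - q2 (sigC L) (fun cc => v (a, b, cc))
      = sumR enumB (fun j => Cnorm2 (inner enumB (c j) (fun cc => Omega a b cc)) / (nu j + t))).
    { intros a b. apply (var_c (sigC L) c nu Hsp (fun cc => Omega a b cc) t Ht). }
    assert (E : sumR enumB (fun a => sumR enumB (fun b =>
        2 * re (inner enumB (fun cc => v (a, b, cc)) (fun cc => Omega a b cc))
        - t * sumR enumB (fun cc => Cnorm2 (v (a, b, cc))) - q2 (sigC L) (fun cc => v (a, b, cc))))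
      = sumR enumB (fun j => p j / (nu j + t))).
    { rewrite (sumR_ext _ _ (fun a => sumR enumB (fun b =>
          sumR enumB (fun j => Cnorm2 (inner enumB (c j) (fun cc => Omega a b cc)) / (nu j + t))))).
      2:{ intros a; apply sumR_ext; intros b; apply VC. }
      rewrite !sumR_enumB. unfold p. cbv beta. rewrite <- !pform.
      pose proof (Hnu false). pose proof (Hnu true).
      rewrite !sumR_enumB. field. lra. }
    rewrite E in C1. exact C1. }
  assert (So : sumR enum3 o = 1) by (unfold o; rewrite (norm8 e Hc); apply omega_norm).
  assert (Sp : sumR enumB p = 1) by (apply psum; exact Hc2).
  assert (Hp : forall j, 0 <= p j).
  { intros j; unfold p. pose proof (ov_nonneg (c j) cpv). pose proof (ov_nonneg (c j) cmv).
    pose proof mp_pos; pose proof mm_pos. nra. }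
  assert (Ho : forall k, 0 <= o k) by (intros; apply Cnorm2_nonneg).
  assert (Main : forall t0, 0 < t0 -> hl mp + hl mm - 2 * t0 <= sumR enum3 (fun k =>
     if Req_dec_T (o k) 0 then 0 else - o k * ln (lam k))).
  { intros t0 Ht0.
    pose proof (CQ2.phi_arg enum3 enumB o lam p nu Ho Hl Hp Hnu So Sp Var t0 Ht0) as PH.
    pose proof (gibbs p nu t0 Hp Hnu ltac:(rewrite sumR_enumB in Sp; lra) Snu Ht0) as G.
    assert (MJ : hl mp + hl mm <= sumR enumB (fun j => hl (p j))) by (apply major; exact Hc2).
    assert (T : - sumR enum3 (fun k => o k * ln (lam k + t0)) <= sumR enum3 (fun k =>
       if Req_dec_T (o k) 0 then 0 else - o k * ln (lam k))).
    { rewrite <- sumR_opp. apply sumR_le; intros k. destruct (Req_dec_T (o k) 0) as [E|E].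
      - rewrite E; lra.
      - pose proof (Hfin k E) as Hlk. pose proof (Ho k).
        pose proof (ln_le_mono (lam k) (lam k + t0) Hlk ltac:(lra)). nra. }
    lra. }
  assert (Fin : hl mp + hl mm <= sumR enum3 (fun k => if Req_dec_T (o k) 0 then 0 else - o k * ln (lam k))).
  { destruct (Rle_dec (hl mp + hl mm) (sumR enum3 (fun k => if Req_dec_T (o k) 0 then 0 else - o k * ln (lam k)))) as [|N]; auto.
    apply Rnot_le_lt in N. exfalso.
    set (d := hl mp + hl mm - sumR enum3 (fun k => if Req_dec_T (o k) 0 then 0 else - o k * ln (lam k))) in *.
    pose proof (Main (d / 4) ltac:(unfold d; lra)). unfold d in H. lra. }
  assert (Rel : relent_val Omega e lam = sumR enum3 (fun k => if Req_dec_T (o k) 0 then 0 else - o k * ln (lam k)) / ln 2).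
  { unfold relent_val, Rdiv. rewrite Rmult_comm, <- sumR_scal. apply sumR_ext; intros k.
    unfold ovl. fold (o k). destruct (Req_dec_T (o k) 0). ring. unfold log2. field. pose proof ln2_pos; lra. }
  rewrite Rel. unfold Hstar. rewrite !hterm_hl. pose proof ln2_pos.
  unfold Rdiv. rewrite <- Rmult_plus_distr_r. apply Rmult_le_compat_r. left; apply Rinv_0_lt_compat; auto.
  exact Fin.
Qed.

Definition e8 (k : Idx3) (x : Idx3) : Cx :=
  match k with (k1, k2, k3) => match x with (a, b, c) => Cmul (Cmul (cb k1 a) (cb k2 b)) (cb k3 c) end end.
Definition lam8 (k : Idx3) : R :=
  match k with (false, false, false) => mp | (true, true, true) => mm | _ => 0 end.
Definition sstar : Mat8 := fun x y => sumC enum3 (fun k => Cmul (RtoC (lam8 k)) (Cmul (e8 k x) (Cconj (e8 k y)))).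

Lemma inner_prod3 (f1 f2 f3 g1 g2 g3 : bool -> Cx) :
  inner enum3 (fun x => match x with (a, b, c) => Cmul (Cmul (f1 a) (f2 b)) (f3 c) end)
              (fun x => match x with (a, b, c) => Cmul (Cmul (g1 a) (g2 b)) (g3 c) end) =
  Cmul (Cmul (inner enumB f1 g1) (inner enumB f2 g2)) (inner enumB f3 g3).
Proof. unfold inner. rewrite sumC_enum3. cxring. Qed.

Lemma e8_onb : ONB3 e8.
Proof.
  intros [[k1 k2] k3] [[l1 l2] l3]. unfold e8. rewrite inner_prod3.
  rewrite !(cb_onb _ _). destruct k1, k2, k3, l1, l2, l3; simpl; cxring.
Qed.

Definition P (k : bool) : Mat2 := fun i j => Cmul (cb k i) (Cconj (cb k j)).

Lemma P_density k : density2 (P k).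
Proof.
  split; [| split].
  - intros i j; unfold P; cxring.
  - intros v. assert (E : re (sumC enumB (fun i => sumC enumB (fun j => Cmul (Cmul (Cconj (v i)) (P k i j)) (v j))))
      = Cnorm2 (inner enumB (cb k) v)) by (unfold P; cunf; ring).
    rewrite E. apply Cnorm2_nonneg.
  - pose proof rp2rm2. destruct k; unfold P, cb, cpv, cmv, cp, cm; apply Cx_ext; cunf; lra.
Qed.

Lemma sstar_sep : fully_separable sstar.
Proof.
  exists [(mp, (P false, P false, P false)); (mm, (P true, P true, P true))].
  split; [| split].
  - apply Forall_cons. simpl. split. left; apply mp_pos. repeat split; apply P_density.
    apply Forall_cons. simpl. split. left; apply mm_pos. repeat split; apply P_density.
    apply Forall_nil.
  - simpl. rewrite Rplus_0_r. apply mp_mm.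
  - intros [[a b] c] [[a' b'] c']. unfold sstar. rewrite sumC_enum3. simpl lam8.
    unfold e8, prod_state, P. simpl. unfold cpv, cmv. generalize (cp a) (cp b) (cp c) (cp a') (cp b') (cp c')
      (cm a) (cm b) (cm c) (cm a') (cm b') (cm c'). intros. cxring.
Qed.

Lemma ovl_reorg k1 k2 k3 : inner enum3 (e8 (k1, k2, k3)) (vec3 Omega) = inner enumB (cb k3) (amp2 (cb k1) (cb k2)).
Proof.
  unfold e8, inner, amp2. rewrite sumC_enum3. cbv beta iota delta [vec3].
  generalize Omega (cb k1) (cb k2) (cb k3). intros. cxring.
Qed.

Lemma ovl_val k : ovl Omega e8 k = lam8 k.
Proof.
  destruct k as [[k1 k2] k3]. unfold ovl. rewrite ovl_reorg, amp3, !inner_cb_p, !inner_cb_m.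
  pose proof rp_sq. pose proof rm_sq.
  destruct k1, k2, k3; simpl lam8; cunf; nra.
Qed.

Lemma IsER_Omega : IsER Omega Hstar.
Proof.
  split.
  - exists sstar, e8, lam8. split; [exact sstar_sep |]. split; [split; [exact e8_onb | intros; reflexivity] |].
    split.
    + intros k H. rewrite ovl_val in H. destruct k as [[k1 k2] k3]; destruct k1, k2, k3; simpl in *;
      try (exfalso; apply H; reflexivity); [apply mm_pos | apply mp_pos].
    + unfold relent_val. rewrite (sumR_ext _ _ (fun k => hterm (lam8 k))).
      * simpl. rewrite hterm_0. unfold Hstar. ring.
      * intros k. rewrite ovl_val. unfold hterm. reflexivity.
  - intros s e lam Hs Hsp Hf. exact (ER_lower s e lam Hs Hsp Hf).
Qed.

Theorem mainTheorem5 :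
  IsEMB Omega (H2 ((1 + / sqrt 5) / 2)) /\
  IsER Omega (H2 ((1 + / sqrt 5) / 2)) /\
  IsEHmin Omega (H2 ((1 + / sqrt 5) / 2)) /\
  IsVNEntropyC Omega (H2 ((1 + / sqrt 5) / 2)) /\
  Rabs (H2 ((1 + / sqrt 5) / 2) - 8505 / 10000) < 5 / 100000.
Proof.
  rewrite hterm_mp_eq.
  split. exact IsEMB_Omega.
  split. exact IsER_Omega.
  split. exact IsEHmin_Omega.
  split. exact IsVN_Omega.
  exact Hstar_num.
Qed.
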